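(* Let $\mathcal X,\mathcal Y$ be finite or countably infinite sets, let $P_X,Q_X$ be probability mass functions with $P_X(x)>0$ and $Q_X(x)>0$ for all $x\in\mathcal X$, and let $$\xi_1:=\inf_{x\in\mathcal X}\frac{P_X(x)}{Q_X(x)}\in[0,1],\qquad \xi_2:=\sup_{x\in\mathcal X}\frac{P_X(x)}{Q_X(x)}\in[1,\infty].$$ Let $W_{Y|X}$ be a stochastic transformation from $\mathcal X$ to $\mathcal Y$ such that for every $y\in\mathcal Y$ there is $x\in\mathcal X$ with $W_{Y|X}(y|x)>0$, and let $P_Y:=P_XW_{Y|X}$, $Q_Y:=Q_XW_{Y|X}$, i.e. $P_Y(y)=\sum_x P_X(x)W_{Y|X}(y|x)$ and $Q_Y(y)=\sum_xQ_X(x)W_{Y|X}(y|x)$. Let $f:(0,\infty)\to\mathbb R$ be convex with $f(1)=0$, let $\mathcal I:=\mathcal I(\xi_1,\xi_2):=[\xi_1,\xi_2]\cap(0,\infty)$, and let $c_f=c_f(\xi_1,\xi_2)\ge 0$ be a constant such that $$f'_+(v)-f'_+(u)\ge 2c_f\,(v-u)\qquad\forall\,u,v\in\mathcal I,\ u<v,$$ where $f'_+$ is the right derivative of $f$. Then: (a) $D_f(P_X\|Q_X)-D_f(P_Y\|Q_Y)\ge c_f(\xi_1,\xi_2)\,[\chi^2(P_X\|Q_X)-\chi^2(P_Y\|Q_Y)]\ge 0$, with equality in the first inequality when $D_f$ is the $\chi^2$-divergence and $c_f\equiv 1$. (b) If $f$ is twice differentiable on $\mathcal I$, the largest constant satisfying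 the condition above is $c_f(\xi_1,\xi_2)=\tfrac12\inf_{t\in\mathcal I}f''(t)$. (c) Under the assumption of (b), with $f^\ast(t):=t f(1/t)$ for $t>0$, $$D_f(P_X\|Q_X)-D_f(P_Y\|Q_Y)\ge c_{f^\ast}\!\left(\tfrac1{\xi_2},\tfrac1{\xi_1}\right)[\chi^2(Q_X\|P_X)-\chi^2(Q_Y\|P_Y)]\ge 0,$$ where $c_{f^\ast}(\tfrac1{\xi_2},\tfrac1{\xi_1})=\tfrac12\inf_{t\in\mathcal I}\{t^3f''(t)\}$ (with $1/\xi_1:=\infty$ if $\xi_1=0$); equality holds in the first inequality when $D_f(P\|Q)=\chi^2(Q\|P)$ (Neyman's $\chi^2$-divergence) with $c_{f^\ast}\equiv1$. (d) Under the assumption of (b), if $e_f(\xi_1,\xi_2):=\tfrac12\sup_{t\in\mathcal I}f''(t)<\infty$, then $D_f(P_X\|Q_X)-D_f(P_Y\|Q_Y)\le e_f(\xi_1,\xi_2)[\chi^2(P_X\|Q_X)-\chi^2(P_Y\|Q_Y)]$; and if $e_{f^\ast}(\tfrac1{\xi_2},\tfrac1{\xi_1}):=\tfrac12\sup_{t\in\mathcal I}\{t^3f''(t)\}<\infty$, then $D_f(P_X\|Q_X)-D_f(P_Y\|Q_Y)\le e_{f^\ast}(\tfrac1{\xi_2},\tfrac1{\xi_1})[\chi^2(Q_X\|P_X)-\chi^2(Q_Y\|P_Y)]$. These hold with equality for Pearson's, resp. Neyman's, $\chi^2$-divergence with $e_f\equiv1$, resp. $e_{f^\ast}\equiv1$.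 (e) Let $\{P_X^{(n)}\}$ be probability mass functions on $\mathcal X$ converging pointwise to $Q_X$ (supported on $\mathcal X$), with $P_Y^{(n)}:=P_X^{(n)}W_{Y|X}$, such that $\lim_n\inf_x P^{(n)}_X(x)/Q_X(x)=1$ and $\lim_n\sup_xP_X^{(n)}(x)/Q_X(x)=1$. If $f$ has a continuous second derivative at $1$, then $$\lim_{n\to\infty}\frac{D_f(P_X^{(n)}\|Q_X)-D_f(P_Y^{(n)}\|Q_Y)}{\chi^2(P_X^{(n)}\|Q_X)-\chi^2(P_Y^{(n)}\|Q_Y)}=\tfrac12f''(1)=\lim_{n\to\infty}\frac{D_f(P_X^{(n)}\|Q_X)-D_f(P_Y^{(n)}\|Q_Y)}{\chi^2(Q_X\|P_X^{(n)})-\chi^2(Q_Y\|P_Y^{(n)})}.$$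
   Context: For a convex $f:(0,\infty)\to\mathbb R$ with $f(1)=0$ and probability mass functions $P,Q$ on a countable set, the $f$-divergence is $D_f(P\|Q):=\sum_x Q(x)f(P(x)/Q(x))$, with conventions $f(0):=\lim_{t\to0^+}f(t)$, $0f(0/0):=0$, $0f(a/0):=a\lim_{u\to\infty}f(u)/u$ for $a>0$ (for general measures, $D_f(P\|Q)=\int q f(p/q)\,d\mu$ with $p,q$ densities w.r.t. a dominating $\mu$). Pearson's $\chi^2$-divergence is $\chi^2(P\|Q):=D_f(P\|Q)$ with $f(t)=(t-1)^2$, i.e. $\sum_x (P(x)-Q(x))^2/Q(x)$. *)

(* Defs.v *)
From Stdlib Require Import Reals Lra List Classical ClassicalEpsilon.
Open Scope R_scope.

Inductive ER : Type := Fin (r : R) | PInf.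

(** Supremum of a set of reals, in ER (+oo if unbounded above);
    the set is assumed non-empty where used. *)
Definition sup_ER (E : R -> Prop) : ER :=
  match excluded_middle_informative (bound E) with
  | left Hb =>
      match excluded_middle_informative (exists x, E x) with
      | left Hn => Fin (proj1_sig (completeness E Hb Hn))
      | right _ => Fin 0
      end
  | right _ => PInf
  end.

(** Real supremum / infimum of a set of reals (junk value 0 if the set is
    empty or unbounded on the relevant side). *)
Definition Rsup (E : R -> Prop) : R :=
  match sup_ER E with Fin r => r | PInf => 0 end.
Definition Rinf (E : R -> Prop) : R := - Rsup (fun y => E (- y)).

Definition lsum {T : Type} (g : T -> R) (l : list T) : R :=
  fold_right (fun x acc => g x + acc) 0 l.

Definition sumER {T : Type} (g : T -> R) : ER :=
  sup_ER (fun s => exists l : list T, NoDup l /\ s = lsum g l).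

(** Sum of a real family, as (sum of positive parts) - (sum of negative parts);
    used only when the negative parts are summable (always the case for an
    f-divergence with f convex). *)
Definition ssum {T : Type} (g : T -> R) : ER :=
  match sumER (fun x => Rmax (g x) 0), sumER (fun x => Rmax (- g x) 0) with
  | Fin a, Fin b => Fin (a - b)
  | PInf, Fin _ => PInf
  | _, PInf => Fin 0 (* junk, never occurs for f-divergences *)
  end.

Definition countable (T : Type) : Prop :=
  exists enc : T -> nat, forall x y, enc x = enc y -> x = y.

Definition pmf {T : Type} (P : T -> R) : Prop :=
  (forall x, 0 <= P x) /\ sumER P = Fin 1.

(** Stochastic transformation W(y|x) written W x y. *)
Definition stochastic {X Y : Type} (W : X -> Y -> R) : Prop :=
  (forall x y, 0 <= W x y) /\ (forall x, sumER (W x) = Fin 1).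

(** Output distribution P W : y |-> sum_x P(x) W(y|x) (always finite). *)
Definition push {X Y : Type} (P : X -> R) (W : X -> Y -> R) (y : Y) : R :=
  match sumER (fun x => P x * W x y) with Fin r => r | PInf => 0 end.

(** f-divergence D_f(P||Q) = sum_x Q(x) f(P(x)/Q(x)) (for Q > 0 everywhere,
    which is the case for all divergences in the theorem). *)
Definition Df {T : Type} (f : R -> R) (P Q : T -> R) : ER :=
  ssum (fun x => Q x * f (P x / Q x)).

Definition chi2 {T : Type} (P Q : T -> R) : ER :=
  Df (fun t => (t - 1) ^ 2) P Q.

Definition convex_pos (f : R -> R) : Prop :=
  forall x y t, 0 < x -> 0 < y -> 0 <= t <= 1 ->
    f (t * x + (1 - t) * y) <= t * f x + (1 - t) * f y.

Definition is_rderiv (f : R -> R) (v l : R) : Prop :=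
  forall eps, 0 < eps -> exists delta, 0 < delta /\
    forall h, 0 < h < delta -> Rabs ((f (v + h) - f v) / h - l) < eps.

(** The interval I(xi1, xi2) = [xi1, xi2] ∩ (0, oo), where
    xi1 = inf_x r(x), xi2 = sup_x r(x) (possibly +oo), r(x) = P(x)/Q(x).
    t >= inf r  iff every lower bound of r is <= t;
    t <= sup r  iff t is <= every upper bound of r (vacuous when sup = +oo). *)
Definition intI {T : Type} (P Q : T -> R) (t : R) : Prop :=
  0 < t /\
  (forall m, (forall x, m <= P x / Q x) -> m <= t) /\
  (forall M, (forall x, P x / Q x <= M) -> t <= M).

Definition cf_ok (f : R -> R) (I : R -> Prop) (c : R) : Prop :=
  0 <= c /\
  forall u v a b, I u -> I v -> u < v ->
    is_rderiv f u a -> is_rderiv f v b -> b - a >= 2 * c * (v - u).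

Definition twice_diff_on (f : R -> R) (I : R -> Prop) (f2 : R -> R) : Prop :=
  exists f1 : R -> R,
    (forall t, I t -> exists d, 0 < d /\
        forall s, Rabs (s - t) < d -> derivable_pt_lim f s (f1 s)) /\
    (forall t, I t -> derivable_pt_lim f1 t (f2 t)).

Definition C2_at_1 (f : R -> R) (f2 : R -> R) : Prop :=
  exists d f1, 0 < d /\
    (forall s, Rabs (s - 1) < d ->
       derivable_pt_lim f s (f1 s) /\ derivable_pt_lim f1 s (f2 s)) /\
    continuity_pt f2 1.

Definition img (I : R -> Prop) (g : R -> R) : R -> Prop :=
  fun y => exists t, I t /\ y = g t.

(** "a - b >= c (d - e) >= 0" read on the real values of the four
    (extended-real) quantities, whenever they are finite. *)
Definition ge_diff (A B C D : ER) (c : R) : Prop :=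
  forall a b d e, A = Fin a -> B = Fin b -> C = Fin d -> D = Fin e ->
    c * (d - e) <= a - b /\ 0 <= c * (d - e).
Definition le_diff (A B C D : ER) (c : R) : Prop :=
  forall a b d e, A = Fin a -> B = Fin b -> C = Fin d -> D = Fin e ->
    a - b <= c * (d - e).

(** "lim_n (A n - B n)/(C n - D n) = L", the ratio being considered at those
    n where the four quantities are finite and the denominator is non-zero. *)
Definition ratio_lim (A B C D : nat -> ER) (L : R) : Prop :=
  forall eps, 0 < eps -> exists N, forall n a b d e, (N <= n)%nat ->
    A n = Fin a -> B n = Fin b -> C n = Fin d -> D n = Fin e -> d - e <> 0 ->
    Rabs ((a - b) / (d - e) - L) < eps.

(* Main.v *)
Require Import Defs.
From Stdlib Require Import Reals Lra Lia List Classical ClassicalEpsilon ZArith FunctionalExtensionality.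
Require Coquelicot.Coquelicot.
Open Scope R_scope.

Definition deq {T : Type} (x y : T) : {x = y} + {x <> y} :=
  excluded_middle_informative (x = y).

Definition PS {T : Type} (g : T -> R) : R -> Prop :=
  fun s => exists l : list T, NoDup l /\ s = lsum g l.
Definition HS {T : Type} (g : T -> R) (s : R) : Prop := is_lub (PS g) s.
Definition nn {T : Type} (g : T -> R) : Prop := forall x, 0 <= g x.

Lemma lsum_cons {T} (g : T -> R) a l : lsum g (a :: l) = g a + lsum g l.
Proof. reflexivity. Qed.
Lemma lsum_nil {T} (g : T -> R) : lsum g nil = 0.
Proof. reflexivity. Qed.

Lemma lsum_plus {T} (g h : T -> R) l :
  lsum (fun x => g x + h x) l = lsum g l + lsum h l.
Proof. induction l; simpl; [lra|]. unfold lsum in *; simpl in *. rewrite IHl. lra. Qed.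

Lemma lsum_scal {T} (g : T -> R) c l :
  lsum (fun x => c * g x) l = c * lsum g l.
Proof. induction l; simpl; [lra|]. unfold lsum in *; simpl in *. rewrite IHl. lra. Qed.

Lemma lsum_ext {T} (g h : T -> R) l : (forall x, g x = h x) -> lsum g l = lsum h l.
Proof. intro H. induction l; simpl; auto. unfold lsum in *; simpl. rewrite IHl, H. lra. Qed.

Lemma lsum_le {T} (g h : T -> R) l : (forall x, g x <= h x) -> lsum g l <= lsum h l.
Proof. intro H. induction l; simpl; [lra|]. unfold lsum in *; simpl. specialize (H a). lra. Qed.

Lemma lsum_nn {T} (g : T -> R) l : nn g -> 0 <= lsum g l.
Proof. intro H. induction l; simpl; [lra|]. unfold lsum in *; simpl. specialize (H a). lra. Qed.

Lemma remove_cons {T} (a b : T) l : remove deq a (b :: l) =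
  if deq a b then remove deq a l else b :: remove deq a l.
Proof. reflexivity. Qed.

Lemma lsum_remove_le {T} (g : T -> R) a l : nn g -> lsum g (remove deq a l) <= lsum g l.
Proof.
  intro H. induction l as [|b l IH]; [simpl; lra|]. rewrite remove_cons.
  destruct (deq a b); rewrite ?lsum_cons; specialize (H b); lra.
Qed.

Lemma lsum_remove {T} (g : T -> R) a l : nn g -> In a l ->
  g a + lsum g (remove deq a l) <= lsum g l.
Proof.
  intros H Hin. induction l as [|b l IH]; [simpl in *; contradiction|]. rewrite remove_cons.
  destruct (deq a b) as [e|ne].
  - subst. rewrite lsum_cons. pose proof (lsum_remove_le g b l H). lra.
  - destruct Hin as [e|Hin]; [congruence|]. rewrite !lsum_cons. specialize (IH Hin). lra.
Qed.

Lemma lsum_incl {T} (g : T -> R) l1 l2 : nn g -> NoDup l1 -> incl l1 l2 ->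
  lsum g l1 <= lsum g l2.
Proof.
  intros H. revert l2. induction l1 as [|a l1 IH]; intros l2 Hnd Hi.
  - simpl. apply lsum_nn; auto.
  - apply NoDup_cons_iff in Hnd as [Hna Hnd].
    assert (Ha : In a l2) by (apply Hi; simpl; auto).
    assert (Hi' : incl l1 (remove deq a l2)).
    { intros x Hx. apply in_in_remove. intro e; subst; contradiction. apply Hi; simpl; auto. }
    specialize (IH _ Hnd Hi'). pose proof (lsum_remove g a l2 H Ha).
    rewrite lsum_cons. lra.
Qed.

Lemma HS_ub {T} (g : T -> R) s l : HS g s -> NoDup l -> lsum g l <= s.
Proof. intros [H _] Hl. apply H. exists l; auto. Qed.

Lemma HS_least {T} (g : T -> R) s M : HS g s ->
  (forall l, NoDup l -> lsum g l <= M) -> s <= M.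
Proof. intros [_ H] HM. apply H. intros x [l [Hl ->]]. auto. Qed.

Lemma HS_intro {T} (g : T -> R) s : (forall l, NoDup l -> lsum g l <= s) ->
  (forall M, (forall l, NoDup l -> lsum g l <= M) -> s <= M) -> HS g s.
Proof.
  intros H1 H2. split.
  - intros x [l [Hl ->]]. auto.
  - intros b Hb. apply H2. intros l Hl. apply Hb. exists l; auto.
Qed.

Lemma HS_ex {T} (g : T -> R) M : (forall l, NoDup l -> lsum g l <= M) ->
  exists s, HS g s.
Proof.
  intros H. assert (Hb : bound (PS g)).
  { exists M. intros x [l [Hl ->]]. auto. }
  assert (Hn : exists x, PS g x). { exists 0. exists nil. split; [constructor|reflexivity]. }
  destruct (completeness _ Hb Hn) as [s Hs]. exists s; exact Hs.
Qed.

Lemma HS_uniq {T} (g : T -> R) s t : HS g s -> HS g t -> s = t.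
Proof.
  intros Hs Ht. apply Rle_antisym.
  - apply (HS_least g s t Hs). intros l Hl. apply (HS_ub g t l Ht Hl).
  - apply (HS_least g t s Ht). intros l Hl. apply (HS_ub g s l Hs Hl).
Qed.

Lemma HS_nn {T} (g : T -> R) s : HS g s -> 0 <= s.
Proof. intros H. pose proof (HS_ub g s nil H (NoDup_nil _)). simpl in H0. exact H0. Qed.

Lemma HS_approx {T} (g : T -> R) s eps : HS g s -> 0 < eps ->
  exists l, NoDup l /\ s - eps < lsum g l.
Proof.
  intros H He. apply NNPP. intro C.
  assert (s <= s - eps).
  { apply (HS_least g s _ H). intros l Hl. destruct (Rlt_le_dec (s - eps) (lsum g l)); auto.
    exfalso; apply C; exists l; auto. }
  lra.
Qed.

Lemma HS_single {T} (g : T -> R) s x : HS g s -> g x <= s.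
Proof.
  intros H. pose proof (HS_ub g s (x :: nil) H).
  assert (NoDup (x :: nil)) by (constructor; [simpl; tauto| constructor]).
  specialize (H0 H1). simpl in H0. unfold lsum in H0; simpl in H0. lra.
Qed.

Lemma HS_zero {T : Type} : HS (fun _ : T => 0) 0.
Proof.
  apply HS_intro.
  - intros l _. induction l; simpl; [lra|]. unfold lsum in *; simpl; lra.
  - intros M H. specialize (H nil (NoDup_nil _)). simpl in H. exact H.
Qed.

Lemma HS_ext {T} (g h : T -> R) s : (forall x, g x = h x) -> HS g s -> HS h s.
Proof.
  intros E H. apply HS_intro.
  - intros l Hl. rewrite <- (lsum_ext g h l E). apply HS_ub; auto.
  - intros M HM. apply (HS_least g s M H). intros l Hl. rewrite (lsum_ext g h l E). auto.
Qed.

Lemma HS_plus {T} (g h : T -> R) s t : nn g -> nn h -> HS g s -> HS h t ->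
  HS (fun x => g x + h x) (s + t).
Proof.
  intros Hg Hh Hs Ht. apply HS_intro.
  - intros l Hl. rewrite lsum_plus. pose proof (HS_ub g s l Hs Hl). pose proof (HS_ub h t l Ht Hl). lra.
  - intros M HM.
    assert (K : forall l1 l2, NoDup l1 -> NoDup l2 -> lsum g l1 + lsum h l2 <= M).
    { intros l1 l2 H1 H2. set (l := nodup deq (l1 ++ l2)).
      assert (Hl : NoDup l) by apply NoDup_nodup.
      assert (I1 : incl l1 l). { intros x Hx. apply nodup_In. apply in_or_app; auto. }
      assert (I2 : incl l2 l). { intros x Hx. apply nodup_In. apply in_or_app; auto. }
      pose proof (lsum_incl g l1 l Hg H1 I1). pose proof (lsum_incl h l2 l Hh H2 I2).
      specialize (HM l Hl). rewrite lsum_plus in HM. lra. }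
    assert (K2 : forall l2, NoDup l2 -> lsum h l2 <= M - s).
    { intros l2 H2. assert (s <= M - lsum h l2).
      { apply (HS_least g s _ Hs). intros l1 H1. specialize (K l1 l2 H1 H2). lra. }
      lra. }
    pose proof (HS_least h t _ Ht K2). lra.
Qed.

Lemma HS_scal {T} (g : T -> R) s c : 0 <= c -> HS g s -> HS (fun x => c * g x) (c * s).
Proof.
  intros Hc H. destruct (Req_dec c 0) as [e|ne].
  - subst. apply HS_intro.
    + intros l _. rewrite lsum_scal. lra.
    + intros M HM. specialize (HM nil (NoDup_nil _)). simpl in HM. lra.
  - apply HS_intro.
    + intros l Hl. rewrite lsum_scal. pose proof (HS_ub g s l H Hl). apply Rmult_le_compat_l; lra.
    + intros M HM. assert (s <= M / c).
      { apply (HS_least g s _ H). intros l Hl. specialize (HM l Hl). rewrite lsum_scal in HM.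
        apply (Rmult_le_reg_l c); [lra|]. field_simplify; lra. }
      apply (Rmult_le_compat_l c) in H0; [|lra]. field_simplify in H0; lra.
Qed.

Lemma HS_le {T} (g h : T -> R) s t : (forall x, g x <= h x) -> HS g s -> HS h t -> s <= t.
Proof.
  intros E Hs Ht. apply (HS_least g s t Hs). intros l Hl.
  pose proof (lsum_le g h l E). pose proof (HS_ub h t l Ht Hl). lra.
Qed.

Lemma HS_le_ex {T} (g h : T -> R) t : (forall x, g x <= h x) -> HS h t -> exists s, HS g s.
Proof.
  intros E Ht. apply (HS_ex g t). intros l Hl.
  pose proof (lsum_le g h l E). pose proof (HS_ub h t l Ht Hl). lra.
Qed.

Lemma HS_lsum_family {T U} (h : T -> U -> R) (B : U -> R) ly :
  (forall x y, 0 <= h x y) -> (forall y, HS (fun x => h x y) (B y)) ->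
  HS (fun x => lsum (h x) ly) (lsum B ly).
Proof.
  intros Hn HB. induction ly as [|y ly IH].
  - simpl. apply (HS_ext (fun _ => 0)); [reflexivity|]. apply HS_zero.
  - simpl. apply (HS_ext (fun x => h x y + lsum (h x) ly)); [reflexivity|].
    change (fold_right (fun x acc => B x + acc) 0 ly) with (lsum B ly).
    apply HS_plus; auto. intros x; apply Hn. intros x; apply lsum_nn. intro; apply Hn.
Qed.

Lemma Fub_half {T U} (h : T -> U -> R) (A : T -> R) S (B : U -> R) :
  (forall x y, 0 <= h x y) -> (forall x, HS (h x) (A x)) -> HS A S ->
  (forall y, HS (fun x => h x y) (B y)) ->
  forall ly, NoDup ly -> lsum B ly <= S.
Proof.
  intros Hn HA HS0 HB ly Hly.
  pose proof (HS_lsum_family h B ly Hn HB).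
  apply (HS_le _ _ _ _ (fun x => HS_ub (h x) (A x) ly (HA x) Hly) H HS0).
Qed.

Lemma Fubini {T U} (h : T -> U -> R) (A : T -> R) S (B : U -> R) :
  (forall x y, 0 <= h x y) -> (forall x, HS (h x) (A x)) -> HS A S ->
  (forall y, HS (fun x => h x y) (B y)) -> HS B S.
Proof.
  intros Hn HA HS0 HB.
  pose proof (Fub_half h A S B Hn HA HS0 HB) as K.
  destruct (HS_ex B S K) as [S' HS'].
  assert (S' <= S) by (apply (HS_least B S' S HS' K)).
  pose proof (Fub_half (fun y x => h x y) B S' A (fun y x => Hn x y) HB HS' HA) as K2.
  assert (S <= S') by (apply (HS_least A S S' HS0 K2)).
  replace S with S' by lra. exact HS'.
Qed.

Lemma Fubini_ex {T U} (h : T -> U -> R) (A : T -> R) S :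
  (forall x, HS (h x) (A x)) -> HS A S ->
  forall y, exists b, HS (fun x => h x y) b.
Proof.
  intros HA HS0 y. apply (HS_le_ex _ A S); auto.
  intros x. apply (HS_single (h x) (A x) y (HA x)).
Qed.

(* approximating four sums with one list *)
Lemma approx4 {T} (g1 g2 g3 g4 : T -> R) s1 s2 s3 s4 c1 c2 c3 c4 :
  nn g1 -> nn g2 -> nn g3 -> nn g4 ->
  HS g1 s1 -> HS g2 s2 -> HS g3 s3 -> HS g4 s4 ->
  (forall l, NoDup l -> 0 <= c1 * lsum g1 l + c2 * lsum g2 l + c3 * lsum g3 l + c4 * lsum g4 l) ->
  0 <= c1 * s1 + c2 * s2 + c3 * s3 + c4 * s4.
Proof.
  intros N1 N2 N3 N4 H1 H2 H3 H4 Hl.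
  destruct (Rle_lt_dec 0 (c1 * s1 + c2 * s2 + c3 * s3 + c4 * s4)) as [ok|bad]; auto.
  exfalso.
  set (K := Rabs c1 + Rabs c2 + Rabs c3 + Rabs c4 + 1).
  assert (HK : 0 < K) by (unfold K; pose proof (Rabs_pos c1); pose proof (Rabs_pos c2);
    pose proof (Rabs_pos c3); pose proof (Rabs_pos c4); lra).
  set (eps := - (c1 * s1 + c2 * s2 + c3 * s3 + c4 * s4) / (2 * K)).
  assert (He : 0 < eps) by (unfold eps; apply Rdiv_lt_0_compat; lra).
  destruct (HS_approx g1 s1 eps H1 He) as [l1 [D1 A1]].
  destruct (HS_approx g2 s2 eps H2 He) as [l2 [D2 A2]].
  destruct (HS_approx g3 s3 eps H3 He) as [l3 [D3 A3]].
  destruct (HS_approx g4 s4 eps H4 He) as [l4 [D4 A4]].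
  set (l := nodup deq (l1 ++ l2 ++ l3 ++ l4)).
  assert (Dl : NoDup l) by apply NoDup_nodup.
  assert (I1 : incl l1 l) by (intros x Hx; apply nodup_In; repeat (apply in_or_app; auto; right)).
  assert (I2 : incl l2 l) by (intros x Hx; apply nodup_In; apply in_or_app; right; apply in_or_app; auto).
  assert (I3 : incl l3 l) by (intros x Hx; apply nodup_In; apply in_or_app; right; apply in_or_app; right; apply in_or_app; auto).
  assert (I4 : incl l4 l) by (intros x Hx; apply nodup_In; apply in_or_app; right; apply in_or_app; right; apply in_or_app; auto).
  pose proof (lsum_incl g1 _ _ N1 D1 I1). pose proof (lsum_incl g2 _ _ N2 D2 I2).
  pose proof (lsum_incl g3 _ _ N3 D3 I3). pose proof (lsum_incl g4 _ _ N4 D4 I4).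
  pose proof (HS_ub g1 s1 l H1 Dl). pose proof (HS_ub g2 s2 l H2 Dl).
  pose proof (HS_ub g3 s3 l H3 Dl). pose proof (HS_ub g4 s4 l H4 Dl).
  specialize (Hl l Dl).
  assert (E : forall c a s, s - eps < a -> a <= s -> c * a <= c * s + Rabs c * eps).
  { intros c a s Ha Hb. destruct (Rle_lt_dec 0 c).
    - rewrite Rabs_right by lra. assert (c * a <= c * s) by (apply Rmult_le_compat_l; lra).
      assert (0 <= c * eps) by (apply Rmult_le_pos; lra). lra.
    - rewrite Rabs_left by lra. nra. }
  pose proof (E c1 (lsum g1 l) s1 ltac:(lra) ltac:(lra)).
  pose proof (E c2 (lsum g2 l) s2 ltac:(lra) ltac:(lra)).
  pose proof (E c3 (lsum g3 l) s3 ltac:(lra) ltac:(lra)).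
  pose proof (E c4 (lsum g4 l) s4 ltac:(lra) ltac:(lra)).
  assert (K * eps = - (c1 * s1 + c2 * s2 + c3 * s3 + c4 * s4) / 2) by (unfold eps; field; lra).
  assert ((Rabs c1 + Rabs c2 + Rabs c3 + Rabs c4) * eps <= K * eps) by (apply Rmult_le_compat_r; unfold K; lra).
  lra.
Qed.

Lemma sup_ER_lub (E : R -> Prop) s : sup_ER E = Fin s -> (exists x, E x) -> is_lub E s.
Proof.
  unfold sup_ER. intros H Hn.
  destruct (excluded_middle_informative (bound E)) as [Hb|Hb]; [|discriminate].
  destruct (excluded_middle_informative (exists x, E x)) as [Hn'|Hn']; [|contradiction].
  injection H as <-. apply proj2_sig.
Qed.

Lemma lub_sup_ER (E : R -> Prop) s : is_lub E s -> (exists x, E x) -> sup_ER E = Fin s.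
Proof.
  intros Hl Hn. unfold sup_ER.
  destruct (excluded_middle_informative (bound E)) as [Hb|Hb].
  2:{ exfalso. apply Hb. exists s. apply Hl. }
  destruct (excluded_middle_informative (exists x, E x)) as [Hn'|Hn']; [|contradiction].
  f_equal. destruct (completeness E Hb Hn') as [m Hm]. simpl.
  destruct Hl as [A B], Hm as [C D]. apply Rle_antisym; auto.
Qed.

Lemma sup_ER_unb (E : R -> Prop) : ~ bound E -> sup_ER E = PInf.
Proof. intros H. unfold sup_ER. destruct (excluded_middle_informative (bound E)); tauto. Qed.

Lemma PS_ne {T} (g : T -> R) : exists x, PS g x.
Proof. exists 0, nil. split; [constructor|reflexivity]. Qed.

Lemma sumER_HS {T} (g : T -> R) s : sumER g = Fin s -> HS g s.
Proof. intros H. apply (sup_ER_lub _ s H (PS_ne g)). Qed.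

Lemma HS_sumER {T} (g : T -> R) s : HS g s -> sumER g = Fin s.
Proof. intros H. apply (lub_sup_ER _ s H (PS_ne g)). Qed.

Lemma sumER_cases {T} (g : T -> R) : (exists s, sumER g = Fin s /\ HS g s) \/ sumER g = PInf.
Proof.
  unfold sumER. destruct (excluded_middle_informative (bound (fun s => exists l : list T, NoDup l /\ s = lsum g l))) as [Hb|Hb].
  - left. destruct (completeness _ Hb (PS_ne g)) as [m Hm]. exists m. split.
    + apply (lub_sup_ER _ m Hm (PS_ne g)).
    + exact Hm.
  - right. apply sup_ER_unb; auto.
Qed.

Lemma Rsup_lub (E : R -> Prop) : bound E -> (exists x, E x) -> is_lub E (Rsup E).
Proof.
  intros Hb Hn. unfold Rsup, sup_ER.
  destruct (excluded_middle_informative (bound E)) as [Hb'|Hb']; [|contradiction].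
  destruct (excluded_middle_informative (exists x, E x)) as [Hn'|Hn']; [|contradiction].
  apply proj2_sig.
Qed.

Lemma Rsup_unb (E : R -> Prop) : ~ bound E -> Rsup E = 0.
Proof. intros H. unfold Rsup. rewrite sup_ER_unb; auto. Qed.

Lemma Rsup_ub (E : R -> Prop) x : bound E -> E x -> x <= Rsup E.
Proof. intros Hb Hx. apply (Rsup_lub E Hb (ex_intro _ x Hx)). auto. Qed.

Lemma Rsup_least (E : R -> Prop) M : (exists x, E x) -> (forall x, E x -> x <= M) -> Rsup E <= M.
Proof.
  intros Hn HM. assert (Hb : bound E) by (exists M; intros x Hx; auto).
  apply (Rsup_lub E Hb Hn). intros x Hx; auto.
Qed.

Lemma Rinf_lb (E : R -> Prop) x m : (forall y, E y -> m <= y) -> E x -> Rinf E <= x.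
Proof.
  intros Hm Hx. unfold Rinf.
  assert (Rsup (fun y => E (- y)) >= - x).
  { apply Rle_ge. apply Rsup_ub. exists (- m). intros y Hy. specialize (Hm _ Hy). lra.
    rewrite Ropp_involutive; auto. }
  lra.
Qed.

Lemma Rinf_greatest (E : R -> Prop) m : (exists x, E x) -> (forall y, E y -> m <= y) -> m <= Rinf E.
Proof.
  intros [x Hx] Hm. unfold Rinf.
  assert (Rsup (fun y => E (- y)) <= - m).
  { apply Rsup_least. exists (- x). rewrite Ropp_involutive; auto.
    intros y Hy. specialize (Hm _ Hy). lra. }
  lra.
Qed.

Definition posp {T} (g : T -> R) := fun x => Rmax (g x) 0.
Definition negp {T} (g : T -> R) := fun x => Rmax (- g x) 0.

Lemma ssum_unpack {T} (g : T -> R) a : ssum g = Fin a -> (exists n, HS (negp g) n) ->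
  exists p n, HS (posp g) p /\ HS (negp g) n /\ a = p - n.
Proof.
  intros H [n Hn]. unfold ssum in H. unfold negp in Hn. rewrite (HS_sumER _ _ Hn) in H.
  destruct (sumER_cases (fun x => Rmax (g x) 0)) as [[p [Ep Hp]]|Ep]; rewrite Ep in H; [|discriminate].
  injection H as <-. exists p, n. auto.
Qed.

Lemma ssum_pack {T} (g : T -> R) p n : HS (posp g) p -> HS (negp g) n -> ssum g = Fin (p - n).
Proof.
  intros Hp Hn. unfold ssum. unfold negp, posp in *. rewrite (HS_sumER _ _ Hn). rewrite (HS_sumER _ _ Hp). reflexivity.
Qed.

Lemma HS_shift {T} (g gt k1 k2 : T -> R) K1 K2 a :
  nn gt -> nn k1 -> nn k2 -> HS k1 K1 -> HS k2 K2 ->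
  (forall x, g x = gt x + k1 x - k2 x) -> ssum g = Fin a ->
  HS gt (a - K1 + K2).
Proof.
  intros Ngt N1 N2 H1 H2 E Hs.
  assert (Hneg : exists n, HS (negp g) n).
  { apply (HS_le_ex _ k2 K2); auto. intros x. unfold negp. rewrite E.
    specialize (Ngt x); specialize (N2 x); specialize (N1 x).
    apply Rmax_lub; lra. }
  destruct (ssum_unpack g a Hs Hneg) as [p [n [Hp [Hn ->]]]].
  assert (Hpk : HS (fun x => posp g x + k2 x) (p + K2)).
  { apply HS_plus; auto. intro x; unfold posp; apply Rmax_r. }
  assert (Hle : forall x, gt x <= posp g x + k2 x).
  { intro x. unfold posp. rewrite E.
    specialize (N1 x); specialize (N2 x); pose proof (Rmax_l (gt x + k1 x - k2 x) 0); lra. }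
  destruct (HS_le_ex gt _ _ Hle Hpk) as [t Ht].
  assert (Hsum : HS (fun x => (gt x + negp g x) + k1 x) (t + n + K1)).
  { apply HS_plus; auto. intro x; unfold negp; specialize (Ngt x); pose proof (Rmax_r (- g x) 0); lra.
    apply HS_plus; auto. intro x; unfold negp; apply Rmax_r. }
  assert (Eq : forall x, (gt x + negp g x) + k1 x = posp g x + k2 x).
  { intros x. unfold posp, negp. rewrite E.
    destruct (Rle_lt_dec 0 (gt x + k1 x - k2 x)).
    - rewrite (Rmax_left (gt x + k1 x - k2 x) 0) by lra. rewrite (Rmax_right (- (gt x + k1 x - k2 x)) 0) by lra. lra.
    - rewrite (Rmax_right (gt x + k1 x - k2 x) 0) by lra. rewrite (Rmax_left (- (gt x + k1 x - k2 x)) 0) by lra. lra. }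
  pose proof (HS_uniq _ _ _ (HS_ext _ _ _ Eq Hsum) Hpk).
  replace (p - n - K1 + K2) with t by lra. exact Ht.
Qed.

Lemma Df_affine {T} (phi : R -> R) (P Q : T -> R) al be a :
  (forall x, 0 < P x) -> (forall x, 0 < Q x) -> HS P 1 -> HS Q 1 ->
  (forall t, 0 < t -> al + be * t <= phi t) ->
  Df phi P Q = Fin a ->
  HS (fun x => Q x * (phi (P x / Q x) - al - be * (P x / Q x))) (a - al - be).
Proof.
  intros HP HQ SP SQ Hb HD.
  set (k1 := fun x => Rabs al * Q x + Rabs be * P x).
  set (k2 := fun x => (Rabs al - al) * Q x + (Rabs be - be) * P x).
  assert (H1 : HS k1 (Rabs al + Rabs be)).
  { replace (Rabs al + Rabs be) with (Rabs al * 1 + Rabs be * 1) by ring.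
    apply HS_plus. intro x; apply Rmult_le_pos; [apply Rabs_pos|left; auto].
    intro x; apply Rmult_le_pos; [apply Rabs_pos|left; auto].
    apply HS_scal; auto; apply Rabs_pos. apply HS_scal; auto; apply Rabs_pos. }
  assert (H2 : HS k2 ((Rabs al - al) + (Rabs be - be))).
  { replace ((Rabs al - al) + (Rabs be - be)) with ((Rabs al - al) * 1 + (Rabs be - be) * 1) by ring.
    pose proof (Rle_abs al). pose proof (Rle_abs be).
    apply HS_plus. intro x; apply Rmult_le_pos; [lra|left; auto].
    intro x; apply Rmult_le_pos; [lra|left; auto].
    apply HS_scal; auto; lra. apply HS_scal; auto; lra. }
  pose proof (HS_shift (fun x => Q x * phi (P x / Q x))
     (fun x => Q x * (phi (P x / Q x) - al - be * (P x / Q x))) k1 k2 (Rabs al + Rabs be) ((Rabs al - al) + (Rabs be - be)) a) as K.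
  replace (a - al - be) with (a - (Rabs al + Rabs be) + ((Rabs al - al) + (Rabs be - be))) by ring.
  apply K; auto.
  - intro x. specialize (HQ x). apply Rmult_le_pos; [lra|].
    specialize (Hb (P x / Q x) (Rdiv_lt_0_compat _ _ (HP x) HQ)). lra.
  - intro x. unfold k1. pose proof (HP x); pose proof (HQ x).
    pose proof (Rabs_pos al); pose proof (Rabs_pos be). nra.
  - intro x. unfold k2. pose proof (HP x); pose proof (HQ x).
    pose proof (Rle_abs al); pose proof (Rle_abs be). nra.
  - intro x. unfold k1, k2. pose proof (HQ x). field. lra.
Qed.

Lemma fchoice {U} (Pr : U -> R -> Prop) : (forall y, exists b, Pr y b) ->
  exists C : U -> R, forall y, Pr y (C y).
Proof.
  intros H. exists (fun y => proj1_sig (constructive_indefinite_description _ (H y))).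
  intro y. apply proj2_sig.
Qed.

Lemma pmf_HS {T} (P : T -> R) : pmf P -> nn P /\ HS P 1.
Proof. intros [H1 H2]. split; auto. apply sumER_HS; auto. Qed.

Lemma W_HS {X Y} (W : X -> Y -> R) x : stochastic W -> HS (W x) 1.
Proof. intros [_ H]. apply sumER_HS; auto. Qed.

Lemma W_le1 {X Y} (W : X -> Y -> R) x y : stochastic W -> W x y <= 1.
Proof. intros H. apply (HS_single (W x) 1 y (W_HS W x H)). Qed.

Lemma push_HS {X Y} (P : X -> R) (W : X -> Y -> R) y : nn P -> HS P 1 -> stochastic W ->
  HS (fun x => P x * W x y) (push P W y).
Proof.
  intros NP SP HW.
  assert (Hle : forall x, P x * W x y <= P x).
  { intro x. pose proof (W_le1 W x y HW). pose proof (NP x). destruct HW as [HW0 _].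
    specialize (HW0 x y). nra. }
  destruct (HS_le_ex _ _ _ Hle SP) as [s Hs].
  unfold push. rewrite (HS_sumER _ _ Hs). exact Hs.
Qed.

Lemma push_sum {X Y} (P : X -> R) (W : X -> Y -> R) : nn P -> HS P 1 -> stochastic W ->
  HS (push P W) 1.
Proof.
  intros NP SP HW.
  apply (Fubini (fun x y => P x * W x y) P 1 (push P W)).
  - intros x y. destruct HW as [HW _]. specialize (HW x y). specialize (NP x). nra.
  - intros x. pose proof (HS_scal (W x) 1 (P x) (NP x) (W_HS W x HW)) as K. rewrite Rmult_1_r in K. exact K.
  - auto.
  - intro y. apply push_HS; auto.
Qed.

Lemma push_pos {X Y} (P : X -> R) (W : X -> Y -> R) y : (forall x, 0 < P x) -> HS P 1 ->
  stochastic W -> (exists x, 0 < W x y) -> 0 < push P W y.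
Proof.
  intros HP SP HW [x Hx].
  pose proof (HS_single _ _ x (push_HS P W y (fun x => Rlt_le _ _ (HP x)) SP HW)).
  simpl in H. specialize (HP x). nra.
Qed.

Lemma push_nn {X Y} (P : X -> R) (W : X -> Y -> R) : nn P -> HS P 1 -> stochastic W -> nn (push P W).
Proof. intros NP SP HW y. apply (HS_nn _ _ (push_HS P W y NP SP HW)). Qed.

Lemma intI_conv {T} (P Q : T -> R) u v t : intI P Q u -> intI P Q v -> u <= t <= v -> intI P Q t.
Proof.
  intros [Hu0 [Hu1 Hu2]] [Hv0 [Hv1 Hv2]] Ht. split; [lra|split].
  - intros m Hm. specialize (Hu1 m Hm). lra.
  - intros M HM. specialize (Hv2 M HM). lra.
Qed.

Lemma ratio_in {T} (P Q : T -> R) x : 0 < P x -> 0 < Q x -> intI P Q (P x / Q x).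
Proof.
  intros HP HQ. split; [apply Rdiv_lt_0_compat; auto|split].
  - intros m Hm. apply Hm.
  - intros M HM. apply HM.
Qed.

Lemma push_ratio_in {X Y} (P Q : X -> R) (W : X -> Y -> R) y :
  (forall x, 0 < P x) -> (forall x, 0 < Q x) -> HS P 1 -> HS Q 1 -> stochastic W ->
  (exists x, 0 < W x y) -> intI P Q (push P W y / push Q W y).
Proof.
  intros HP HQ SP SQ HW Hy.
  pose proof (push_pos P W y HP SP HW Hy) as PY.
  pose proof (push_pos Q W y HQ SQ HW Hy) as QY.
  pose proof (push_HS P W y (fun x => Rlt_le _ _ (HP x)) SP HW) as SPY.
  pose proof (push_HS Q W y (fun x => Rlt_le _ _ (HQ x)) SQ HW) as SQY.
  split; [apply Rdiv_lt_0_compat; auto|split].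
  - intros m Hm. destruct (Rle_lt_dec m 0). { assert (0 < push P W y / push Q W y) by (apply Rdiv_lt_0_compat; auto). lra. }
    assert (m * push Q W y <= push P W y).
    { apply (HS_le (fun x => m * (Q x * W x y)) (fun x => P x * W x y)); auto.
      - intro x. specialize (Hm x). specialize (HQ x). destruct HW as [HW _]. specialize (HW x y).
        assert (m * Q x <= P x).
        { apply (Rmult_le_compat_r (Q x)) in Hm; [|lra]. field_simplify in Hm; lra. }
        nra.
      - apply HS_scal; auto; lra. }
    apply (Rmult_le_reg_r (push Q W y)); auto. field_simplify; lra.
  - intros M HM.
    assert (0 < M). { destruct Hy as [x0 _]. specialize (HM x0).
      pose proof (Rdiv_lt_0_compat _ _ (HP x0) (HQ x0)). lra. }
    assert (push P W y <= M * push Q W y).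
    { apply (HS_le (fun x => P x * W x y) (fun x => M * (Q x * W x y))); auto.
      - intro x. specialize (HM x). specialize (HQ x). destruct HW as [HW _]. specialize (HW x y).
        assert (P x <= M * Q x).
        { apply (Rmult_le_compat_r (Q x)) in HM; [|lra]. field_simplify in HM; lra. }
        nra.
      - apply HS_scal; auto; lra. }
    apply (Rmult_le_reg_r (push Q W y)); auto. field_simplify; lra.
Qed.

Lemma one_in {T} (P Q : T -> R) : (forall x, 0 < P x) -> (forall x, 0 < Q x) -> HS P 1 -> HS Q 1 ->
  intI P Q 1.
Proof.
  intros HP HQ SP SQ. split; [lra|split].
  - intros m Hm. destruct (Rle_lt_dec m 0); [lra|].
    assert (m * 1 <= 1).
    { apply (HS_le (fun x => m * Q x) P); auto.
      - intro x. specialize (Hm x). specialize (HQ x).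
        apply (Rmult_le_compat_r (Q x)) in Hm; [|lra]. field_simplify in Hm; lra.
      - apply HS_scal; auto; lra. }
    lra.
  - intros M HM. destruct (Rle_lt_dec M 0).
    { exfalso. destruct (HS_approx P 1 1 SP ltac:(lra)) as [l [_ Hl]].
      destruct l as [|x l]. simpl in Hl; lra. specialize (HM x).
      pose proof (Rdiv_lt_0_compat _ _ (HP x) (HQ x)). lra. }
    assert (1 <= M * 1).
    { apply (HS_le P (fun x => M * Q x)); auto.
      - intro x. specialize (HM x). specialize (HQ x).
        apply (Rmult_le_compat_r (Q x)) in HM; [|lra]. field_simplify in HM; lra.
      - apply HS_scal; auto; lra. }
    lra.
Qed.

Definition Breg (phi sg : R -> R) (v u : R) : R := phi v - phi u - sg u * (v - u).

Lemma inner_sums {X Y} (Q : X -> R) (W : X -> Y -> R) (psi : X -> R) A :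
  nn Q -> (forall x, 0 <= psi x) -> stochastic W -> HS (fun x => Q x * psi x) A ->
  exists C : Y -> R, (forall y, HS (fun x => Q x * psi x * W x y) (C y)) /\ HS C A.
Proof.
  intros NQ Np HW HA.
  assert (Hin : forall x, HS (fun y => Q x * psi x * W x y) (Q x * psi x)).
  { intro x. pose proof (HS_scal (W x) 1 (Q x * psi x)) as K.
    rewrite Rmult_1_r in K. apply K. specialize (NQ x); specialize (Np x); nra. apply W_HS; auto. }
  destruct (fchoice _ (Fubini_ex (fun x y => Q x * psi x * W x y) _ A Hin HA)) as [C HC].
  exists C. split; auto.
  apply (Fubini (fun x y => Q x * psi x * W x y) (fun x => Q x * psi x) A C); auto.
  intros x y. destruct HW as [HW _]. specialize (HW x y). specialize (NQ x); specialize (Np x).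
  apply Rmult_le_pos; [nra|auto].
Qed.

Lemma core_nn {X Y} (P Q : X -> R) (W : X -> Y -> R) (phi1 phi2 sg1 sg2 : R -> R)
  k1 k2 A1 A2 B1 B2 :
  (forall x, 0 < P x) -> (forall x, 0 < Q x) -> HS P 1 -> HS Q 1 ->
  stochastic W -> (forall y, exists x, 0 < W x y) ->
  (forall t, 0 < t -> 0 <= phi1 t) -> (forall t, 0 < t -> 0 <= phi2 t) ->
  (forall u v, intI P Q u -> intI P Q v -> k2 * Breg phi2 sg2 v u <= k1 * Breg phi1 sg1 v u) ->
  HS (fun x => Q x * phi1 (P x / Q x)) A1 ->
  HS (fun x => Q x * phi2 (P x / Q x)) A2 ->
  HS (fun y => push Q W y * phi1 (push P W y / push Q W y)) B1 ->
  HS (fun y => push Q W y * phi2 (push P W y / push Q W y)) B2 ->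
  k2 * (A2 - B2) <= k1 * (A1 - B1).
Proof.
  intros HP HQ SP SQ HW HWy N1 N2 HB HA1 HA2 HB1 HB2.
  set (r := fun x => P x / Q x).
  set (PY := push P W). set (QY := push Q W).
  set (s := fun y => PY y / QY y).
  assert (rpos : forall x, 0 < r x) by (intro; apply Rdiv_lt_0_compat; auto).
  assert (NQ : nn Q) by (intro x; left; auto).
  assert (NP : nn P) by (intro x; left; auto).
  destruct (inner_sums Q W (fun x => phi1 (r x)) A1 NQ (fun x => N1 _ (rpos x)) HW HA1) as [C1 [HC1 SC1]].
  destruct (inner_sums Q W (fun x => phi2 (r x)) A2 NQ (fun x => N2 _ (rpos x)) HW HA2) as [C2 [HC2 SC2]].
  assert (QYp : forall y, 0 < QY y) by (intro y; apply push_pos; auto).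
  assert (PYp : forall y, 0 < PY y) by (intro y; apply push_pos; auto).
  assert (spos : forall y, 0 < s y) by (intro; apply Rdiv_lt_0_compat; auto).
  assert (Dy : forall y, 0 <= k1 * C1 y - k2 * C2 y - k1 * (QY y * phi1 (s y)) + k2 * (QY y * phi2 (s y))).
  { intro y.
    set (L := k1 * sg1 (s y) - k2 * sg2 (s y)).
    set (K := - k1 * phi1 (s y) + k2 * phi2 (s y) + L * s y).
    pose proof (approx4 (fun x => Q x * phi1 (r x) * W x y) (fun x => Q x * phi2 (r x) * W x y)
      (fun x => Q x * W x y) (fun x => P x * W x y) (C1 y) (C2 y) (QY y) (PY y) k1 (- k2) K (- L)) as AP.
    assert (WN : forall x, 0 <= W x y) by (intro x; destruct HW as [HW' _]; apply HW').
    assert (E : k1 * C1 y + - k2 * C2 y + K * QY y + - L * PY y =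
                k1 * C1 y - k2 * C2 y - k1 * (QY y * phi1 (s y)) + k2 * (QY y * phi2 (s y))).
    { unfold K, s. field. specialize (QYp y). lra. }
    rewrite <- E. apply AP.
    - intro x. specialize (NQ x). specialize (WN x). pose proof (N1 _ (rpos x)). apply Rmult_le_pos; auto. nra.
    - intro x. specialize (NQ x). specialize (WN x). pose proof (N2 _ (rpos x)). apply Rmult_le_pos; auto. nra.
    - intro x. specialize (NQ x). specialize (WN x). nra.
    - intro x. specialize (NP x). specialize (WN x). nra.
    - apply HC1.
    - apply HC2.
    - apply push_HS; auto.
    - apply push_HS; auto.
    - intros l Hl.
      rewrite <- !lsum_scal, <- !lsum_plus. apply lsum_nn. intro x.
      assert (Ir : intI P Q (r x)) by (apply ratio_in; auto).
      assert (Is : intI P Q (s y)) by (apply push_ratio_in; auto).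
      specialize (HB _ _ Is Ir). unfold Breg in HB.
      assert (Pr : P x = Q x * r x) by (unfold r; field; specialize (HQ x); lra).
      rewrite Pr.
      assert (0 <= Q x * W x y) by (specialize (NQ x); specialize (WN x); nra).
      assert (0 <= Q x * W x y * (k1 * (phi1 (r x) - phi1 (s y) - sg1 (s y) * (r x - s y)) -
                                    k2 * (phi2 (r x) - phi2 (s y) - sg2 (s y) * (r x - s y)))).
      { apply Rmult_le_pos; auto. lra. }
      unfold K, L. nra. }
  assert (NC1 : nn C1) by (intro y; apply (HS_nn _ _ (HC1 y))).
  assert (NC2 : nn C2) by (intro y; apply (HS_nn _ _ (HC2 y))).
  pose proof (approx4 C1 C2 (fun y => QY y * phi1 (s y)) (fun y => QY y * phi2 (s y)) A1 A2 B1 B2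
     k1 (- k2) (- k1) k2 NC1 NC2) as AP.
  assert (0 <= k1 * A1 + - k2 * A2 + - k1 * B1 + k2 * B2).
  { apply AP; auto.
    - intro y. specialize (QYp y). pose proof (N1 _ (spos y)). nra.
    - intro y. specialize (QYp y). pose proof (N2 _ (spos y)). nra.
    - intros l Hl. rewrite <- !lsum_scal, <- !lsum_plus. apply lsum_nn. intro y. specialize (Dy y). lra. }
  lra.
Qed.

Lemma core {X Y} (P Q : X -> R) (W : X -> Y -> R) (phi1 phi2 sg1 sg2 : R -> R)
  al1 be1 al2 be2 k1 k2 a1 a2 b1 b2 :
  (forall x, 0 < P x) -> (forall x, 0 < Q x) -> HS P 1 -> HS Q 1 ->
  stochastic W -> (forall y, exists x, 0 < W x y) ->
  (forall t, 0 < t -> al1 + be1 * t <= phi1 t) -> (forall t, 0 < t -> al2 + be2 * t <= phi2 t) ->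
  (forall u v, intI P Q u -> intI P Q v -> k2 * Breg phi2 sg2 v u <= k1 * Breg phi1 sg1 v u) ->
  Df phi1 P Q = Fin a1 -> Df phi2 P Q = Fin a2 ->
  Df phi1 (push P W) (push Q W) = Fin b1 -> Df phi2 (push P W) (push Q W) = Fin b2 ->
  k2 * (a2 - b2) <= k1 * (a1 - b1).
Proof.
  intros HP HQ SP SQ HW HWy L1 L2 HB D1 D2 E1 E2.
  assert (NP : nn P) by (intro x; left; auto).
  assert (NQ : nn Q) by (intro x; left; auto).
  assert (PYp : forall y, 0 < push P W y) by (intro y; apply push_pos; auto).
  assert (QYp : forall y, 0 < push Q W y) by (intro y; apply push_pos; auto).
  pose proof (push_sum P W NP SP HW) as SPY.
  pose proof (push_sum Q W NQ SQ HW) as SQY.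
  pose proof (Df_affine phi1 P Q al1 be1 a1 HP HQ SP SQ L1 D1) as A1.
  pose proof (Df_affine phi2 P Q al2 be2 a2 HP HQ SP SQ L2 D2) as A2.
  pose proof (Df_affine phi1 (push P W) (push Q W) al1 be1 b1 PYp QYp SPY SQY L1 E1) as B1.
  pose proof (Df_affine phi2 (push P W) (push Q W) al2 be2 b2 PYp QYp SPY SQY L2 E2) as B2.
  pose proof (core_nn P Q W (fun t => phi1 t - al1 - be1 * t) (fun t => phi2 t - al2 - be2 * t)
     (fun t => sg1 t - be1) (fun t => sg2 t - be2) k1 k2 (a1 - al1 - be1) (a2 - al2 - be2) (b1 - al1 - be1) (b2 - al2 - be2) HP HQ SP SQ HW HWy) as K.
  replace (a2 - b2) with ((a2 - al2 - be2) - (b2 - al2 - be2)) by ring.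
  replace (a1 - b1) with ((a1 - al1 - be1) - (b1 - al1 - be1)) by ring.
  apply K; auto.
  - intros t Ht. specialize (L1 t Ht). lra.
  - intros t Ht. specialize (L2 t Ht). lra.
  - intros u v Hu Hv. specialize (HB u v Hu Hv). unfold Breg in *.
    replace (phi2 v - al2 - be2 * v - (phi2 u - al2 - be2 * u) - (sg2 u - be2) * (v - u))
      with (phi2 v - phi2 u - sg2 u * (v - u)) by ring.
    replace (phi1 v - al1 - be1 * v - (phi1 u - al1 - be1 * u) - (sg1 u - be1) * (v - u))
      with (phi1 v - phi1 u - sg1 u * (v - u)) by ring. auto.
Qed.

Lemma nat_arch (A0 : R) : exists n : nat, A0 < INR n.
Proof.
  destruct (archimed A0) as [H1 H2].
  destruct (Z_le_gt_dec (up A0) 0) as [Hz|Hz].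
  - exists 0%nat. simpl. apply IZR_le in Hz. lra.
  - exists (Z.to_nat (up A0)). rewrite INR_IZR_INZ. rewrite Z2Nat.id by lia. lra.
Qed.

Lemma cvx3 (f : R -> R) x y z : convex_pos f -> 0 < x -> x < y -> y < z ->
  (z - x) * f y <= (z - y) * f x + (y - x) * f z.
Proof.
  intros Hc Hx Hxy Hyz.
  set (t := (z - y) / (z - x)).
  assert (Ht : 0 <= t <= 1).
  { unfold t. split. apply Rmult_le_pos; [lra|left; apply Rinv_0_lt_compat; lra].
    apply (Rmult_le_reg_r (z - x)); [lra|]. field_simplify; lra. }
  specialize (Hc x z t Hx ltac:(lra) Ht).
  replace (t * x + (1 - t) * z) with y in Hc by (unfold t; field; lra).
  apply (Rmult_le_compat_l (z - x)) in Hc; [|lra].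
  replace ((z - x) * (t * f x + (1 - t) * f z)) with ((z - y) * f x + (y - x) * f z) in Hc
    by (unfold t; field; lra).
  exact Hc.
Qed.

Lemma rd_secant_right (f : R -> R) t a h : convex_pos f -> 0 < t -> is_rderiv f t a -> 0 < h ->
  a * h <= f (t + h) - f t.
Proof.
  intros Hc Ht Hd Hh. destruct (Rle_lt_dec (a * h) (f (t + h) - f t)) as [ok|bad]; auto.
  exfalso. set (eps := a - (f (t + h) - f t) / h).
  assert (He : 0 < eps). { unfold eps. apply (Rmult_lt_reg_r h); auto. field_simplify; lra. }
  destruct (Hd eps He) as [d [Hd0 Hdd]].
  set (h' := Rmin h (d / 2)).
  assert (Hh' : 0 < h' <= h) by (unfold h'; split; [apply Rmin_glb_lt; lra|apply Rmin_l]).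
  assert (Hh'd : h' < d) by (unfold h'; pose proof (Rmin_r h (d/2)); lra).
  specialize (Hdd h' (conj (proj1 Hh') Hh'd)).
  assert (Q : (f (t + h') - f t) / h' <= (f (t + h) - f t) / h).
  { destruct (Req_dec h' h) as [e|ne]. rewrite e; lra.
    pose proof (cvx3 f t (t + h') (t + h) Hc Ht ltac:(lra) ltac:(lra)).
    apply (Rmult_le_reg_r (h' * h)). nra. field_simplify; [|lra|lra]. nra. }
  apply Rabs_def2 in Hdd. unfold eps in *. lra.
Qed.

Lemma rd_secant_left (f : R -> R) t a h : convex_pos f -> 0 < t -> is_rderiv f t a -> 0 < h < t ->
  f t - f (t - h) <= a * h.
Proof.
  intros Hc Ht Hd Hh. destruct (Rle_lt_dec (f t - f (t - h)) (a * h)) as [ok|bad]; auto.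
  exfalso. set (eps := (f t - f (t - h)) / h - a).
  assert (He : 0 < eps). { unfold eps. apply (Rmult_lt_reg_r h); [lra|]. field_simplify; lra. }
  destruct (Hd eps He) as [d [Hd0 Hdd]].
  specialize (Hdd (d / 2) ltac:(lra)).
  pose proof (cvx3 f (t - h) t (t + d / 2) Hc ltac:(lra) ltac:(lra) ltac:(lra)).
  assert (Q : (f t - f (t - h)) / h <= (f (t + d/2) - f t) / (d / 2)).
  { apply (Rmult_le_reg_r (h * (d / 2))). nra. field_simplify; [|lra|lra]. nra. }
  apply Rabs_def2 in Hdd. unfold eps in *. lra.
Qed.

Lemma rd_exists (f : R -> R) t : convex_pos f -> 0 < t -> exists a, is_rderiv f t a.
Proof.
  intros Hc Ht.
  set (E := fun q => exists h, 0 < h /\ q = (f (t + h) - f t) / h).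
  set (L := (f t - f (t - t / 2)) / (t / 2)).
  assert (Hlb : forall q, E q -> L <= q).
  { intros q [h [Hh ->]]. pose proof (cvx3 f (t - t/2) t (t + h) Hc ltac:(lra) ltac:(lra) ltac:(lra)).
    unfold L. apply (Rmult_le_reg_r (h * (t / 2))). nra. field_simplify; [|lra|lra]. nra. }
  assert (Hne : exists q, E q) by (exists ((f (t + 1) - f t) / 1); exists 1; split; [lra|auto]).
  exists (Rinf E). intros eps He.
  assert (Hex : exists h0, 0 < h0 /\ (f (t + h0) - f t) / h0 < Rinf E + eps).
  { apply NNPP. intro C. assert (Rinf E + eps <= Rinf E).
    { apply Rinf_greatest; auto. intros q [h [Hh ->]].
      destruct (Rlt_le_dec ((f (t + h) - f t) / h) (Rinf E + eps)); auto.
      exfalso; apply C; exists h; auto. }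
    lra. }
  destruct Hex as [h0 [Hh0 Hq0]]. exists h0. split; auto.
  intros h [Hh Hhh].
  assert (Rinf E <= (f (t + h) - f t) / h) by (apply (Rinf_lb E _ L); auto; exists h; auto).
  assert ((f (t + h) - f t) / h <= (f (t + h0) - f t) / h0).
  { destruct (Req_dec h h0) as [e|ne]. rewrite e; lra.
    pose proof (cvx3 f t (t + h) (t + h0) Hc Ht ltac:(lra) ltac:(lra)).
    apply (Rmult_le_reg_r (h * h0)). nra. field_simplify; [|lra|lra]. nra. }
  apply Rabs_def1; lra.
Qed.

Lemma rd_unique (f : R -> R) t a b : is_rderiv f t a -> is_rderiv f t b -> a = b.
Proof.
  intros Ha Hb. apply NNPP. intro ne.
  set (eps := Rabs (a - b) / 2).
  assert (He : 0 < eps) by (unfold eps; apply Rdiv_lt_0_compat; [apply Rabs_pos_lt; lra|lra]).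
  destruct (Ha eps He) as [d1 [Hd1 H1]]. destruct (Hb eps He) as [d2 [Hd2 H2]].
  set (h := Rmin d1 d2 / 2).
  assert (0 < h < d1 /\ h < d2).
  { unfold h. pose proof (Rmin_l d1 d2). pose proof (Rmin_r d1 d2).
    assert (0 < Rmin d1 d2) by (apply Rmin_glb_lt; auto). lra. }
  specialize (H1 h ltac:(lra)). specialize (H2 h ltac:(lra)).
  pose proof (Rabs_triang ((f (t + h) - f t) / h - b) (a - (f (t + h) - f t) / h)) as Tr.
  replace ((f (t + h) - f t) / h - b + (a - (f (t + h) - f t) / h)) with (a - b) in Tr by ring.
  rewrite Rabs_minus_sym in H1. unfold eps in *. lra.
Qed.

Lemma deriv_rd (f : R -> R) t l : derivable_pt_lim f t l -> is_rderiv f t l.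
Proof.
  intros H eps He. destruct (H eps He) as [d Hd]. exists d. split; [apply cond_pos|].
  intros h [Hh Hhd]. apply Hd. lra. rewrite Rabs_right; lra.
Qed.

Lemma supp_line (f : R -> R) s a : convex_pos f -> 0 < s -> is_rderiv f s a ->
  forall t, 0 < t -> f s + a * (t - s) <= f t.
Proof.
  intros Hc Hs Hd t Ht. destruct (Rtotal_order t s) as [lt|[eq|gt]].
  - pose proof (rd_secant_left f s a (s - t) Hc Hs Hd ltac:(lra)).
    replace (s - (s - t)) with t in H by ring. lra.
  - subst. lra.
  - pose proof (rd_secant_right f s a (t - s) Hc Hs Hd ltac:(lra)).
    replace (s + (t - s)) with t in H by ring. lra.
Qed.

Lemma affine_lb (f : R -> R) : convex_pos f -> exists al be, forall t, 0 < t -> al + be * t <= f t.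
Proof.
  intros Hc. destruct (rd_exists f 1 Hc ltac:(lra)) as [a Ha].
  exists (f 1 - a), a. intros t Ht. pose proof (supp_line f 1 a Hc ltac:(lra) Ha t Ht). lra.
Qed.

Section Part.
End Part.

Lemma part_right (f : R -> R) (I : R -> Prop) (sg : R -> R) c u v n :
  convex_pos f -> (forall u v t, I u -> I v -> u <= t <= v -> I t) -> (forall t, I t -> 0 < t) ->
  (forall t, I t -> is_rderiv f t (sg t)) ->
  (forall u v, I u -> I v -> u < v -> sg v - sg u >= 2 * c * (v - u)) ->
  I u -> I v -> u < v -> (1 <= n)%nat ->
  c * (v - u) ^ 2 - c * (v - u) ^ 2 / INR n <= f v - f u - sg u * (v - u).
Proof.
  intros Hc Iconv Ipos Hd Hcf Iu Iv Huv Hn.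
  assert (Hn0 : 0 < INR n) by (apply lt_0_INR; lia).
  set (h := (v - u) / INR n).
  assert (Hh : 0 < h) by (unfold h; apply Rdiv_lt_0_compat; lra).
  assert (Hnh : INR n * h = v - u) by (unfold h; field; lra).
  assert (K : forall k, (k <= n)%nat ->
    sg u * (INR k * h) + c * h ^ 2 * INR k * (INR k - 1) <= f (u + INR k * h) - f u).
  { induction k as [|k IH]; intros Hk.
    - simpl. replace (u + 0 * h) with u by ring. lra.
    - specialize (IH ltac:(lia)).
      set (t := u + INR k * h).
      assert (Hkn : INR k * h <= v - u).
      { rewrite <- Hnh. apply Rmult_le_compat_r; [lra|]. apply le_INR; lia. }
      assert (Hk0 : 0 <= INR k * h) by (apply Rmult_le_pos; [apply pos_INR|lra]).
      assert (It : I t) by (apply (Iconv u v); auto; unfold t; lra).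
      pose proof (rd_secant_right f t (sg t) h Hc (Ipos t It) (Hd t It) Hh) as Sec.
      assert (Hsg : sg u + 2 * c * (INR k * h) <= sg t).
      { destruct (Nat.eq_dec k 0) as [e|ne].
        - subst k. unfold t. simpl. replace (u + 0 * h) with u by ring. lra.
        - assert (0 < INR k) by (apply lt_0_INR; lia).
          assert (u < t) by (unfold t; nra).
          specialize (Hcf u t Iu It H0). unfold t in Hcf at 2. lra. }
      assert (M : (sg u + 2 * c * (INR k * h)) * h <= sg t * h) by (apply Rmult_le_compat_r; lra).
      replace (u + INR (S k) * h) with (t + h) by (unfold t; rewrite S_INR; ring).
      assert (EQ : sg u * (INR (S k) * h) + c * h ^ 2 * INR (S k) * (INR (S k) - 1) =
              (sg u * (INR k * h) + c * h ^ 2 * INR k * (INR k - 1)) + (sg u + 2 * c * (INR k * h)) * h)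
        by (rewrite S_INR; ring).
      rewrite EQ. unfold t in *. lra. }
  specialize (K n (le_n n)). rewrite Hnh in K.
  replace (u + (v - u)) with v in K by ring.
  assert (E2 : c * h ^ 2 * INR n * (INR n - 1) = c * (v - u) ^ 2 - c * (v - u) ^ 2 / INR n)
    by (unfold h; field; lra).
  lra.
Qed.

Lemma part_left (f : R -> R) (I : R -> Prop) (sg : R -> R) c u v n :
  convex_pos f -> (forall u v t, I u -> I v -> u <= t <= v -> I t) -> (forall t, I t -> 0 < t) ->
  (forall t, I t -> is_rderiv f t (sg t)) ->
  (forall u v, I u -> I v -> u < v -> sg v - sg u >= 2 * c * (v - u)) ->
  I u -> I v -> v < u -> (1 <= n)%nat ->
  c * (v - u) ^ 2 - c * (v - u) ^ 2 / INR n <= f v - f u - sg u * (v - u).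
Proof.
  intros Hc Iconv Ipos Hd Hcf Iu Iv Huv Hn.
  assert (Hn0 : 0 < INR n) by (apply lt_0_INR; lia).
  set (h := (u - v) / INR n).
  assert (Hh : 0 < h) by (unfold h; apply Rdiv_lt_0_compat; lra).
  assert (Hnh : INR n * h = u - v) by (unfold h; field; lra).
  assert (K : forall k, (k <= n)%nat ->
    f u - f (u - INR k * h) <= sg u * (INR k * h) - c * h ^ 2 * INR k * (INR k - 1)).
  { induction k as [|k IH]; intros Hk.
    - simpl. replace (u - 0 * h) with u by ring. lra.
    - specialize (IH ltac:(lia)).
      set (t := u - INR k * h).
      assert (Hkn : INR k * h <= u - v).
      { rewrite <- Hnh. apply Rmult_le_compat_r; [lra|]. apply le_INR; lia. }
      assert (Hkn' : INR (S k) * h <= u - v).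
      { rewrite <- Hnh. apply Rmult_le_compat_r; [lra|]. apply le_INR; lia. }
      rewrite S_INR in Hkn'.
      assert (Hk0 : 0 <= INR k * h) by (apply Rmult_le_pos; [apply pos_INR|lra]).
      assert (It : I t) by (apply (Iconv v u); auto; unfold t; lra).
      assert (Hv0 : 0 < v) by (apply Ipos; auto).
      pose proof (rd_secant_left f t (sg t) h Hc (Ipos t It) (Hd t It) ltac:(unfold t; lra)) as Sec.
      assert (Hsg : sg t <= sg u - 2 * c * (INR k * h)).
      { destruct (Nat.eq_dec k 0) as [e|ne].
        - subst k. unfold t. simpl. replace (u - 0 * h) with u by ring. lra.
        - assert (0 < INR k) by (apply lt_0_INR; lia).
          assert (t < u) by (unfold t; nra).
          specialize (Hcf t u It Iu H0). unfold t in Hcf at 2. lra. }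
      assert (M : sg t * h <= (sg u - 2 * c * (INR k * h)) * h) by (apply Rmult_le_compat_r; lra).
      replace (u - INR (S k) * h) with (t - h) by (unfold t; rewrite S_INR; ring).
      assert (EQ : sg u * (INR (S k) * h) - c * h ^ 2 * INR (S k) * (INR (S k) - 1) =
              (sg u * (INR k * h) - c * h ^ 2 * INR k * (INR k - 1)) + (sg u - 2 * c * (INR k * h)) * h)
        by (rewrite S_INR; ring).
      rewrite EQ. unfold t in *. lra. }
  specialize (K n (le_n n)). rewrite Hnh in K.
  replace (u - (u - v)) with v in K by ring.
  assert (E2 : c * h ^ 2 * INR n * (INR n - 1) = c * (v - u) ^ 2 - c * (v - u) ^ 2 / INR n)
    by (unfold h; field; lra).
  lra.
Qed.

Lemma partition_bound (f : R -> R) (I : R -> Prop) (sg : R -> R) c :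
  convex_pos f -> (forall u v t, I u -> I v -> u <= t <= v -> I t) -> (forall t, I t -> 0 < t) ->
  (forall t, I t -> is_rderiv f t (sg t)) -> 0 <= c ->
  (forall u v, I u -> I v -> u < v -> sg v - sg u >= 2 * c * (v - u)) ->
  forall u v, I u -> I v -> c * (v - u) ^ 2 <= f v - f u - sg u * (v - u).
Proof.
  intros Hc Iconv Ipos Hd Hc0 Hcf u v Iu Iv.
  assert (Hall : forall n, (1 <= n)%nat ->
     c * (v - u) ^ 2 - c * (v - u) ^ 2 / INR n <= f v - f u - sg u * (v - u)).
  { intros n Hn. destruct (Rtotal_order u v) as [lt|[eq|gt]].
    - apply (part_right f I sg c u v n); auto.
    - subst. replace (v - v) with 0 by ring. assert (0 < INR n) by (apply lt_0_INR; lia).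
      replace (c * 0 ^ 2 - c * 0 ^ 2 / INR n) with 0 by (field; lra). lra.
    - apply (part_left f I sg c u v n); auto. }
  set (D := f v - f u - sg u * (v - u)) in *.
  set (Z := c * (v - u) ^ 2) in *.
  assert (HZ : 0 <= Z) by (unfold Z; apply Rmult_le_pos; auto; apply pow2_ge_0).
  destruct (Rle_lt_dec Z D) as [ok|bad]; auto. exfalso.
  destruct (nat_arch (Z / (Z - D))) as [n Hn].
  assert (Hq : 0 <= Z / (Z - D)) by (apply Rmult_le_pos; auto; left; apply Rinv_0_lt_compat; lra).
  assert (n1 : (1 <= n)%nat) by (destruct n; [simpl in Hn; lra|lia]).
  specialize (Hall n n1).
  assert (0 < INR n) by lra.
  assert (Z / INR n < Z - D).
  { assert (Z < INR n * (Z - D)).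
    { apply (Rmult_lt_compat_r (Z - D)) in Hn; [|lra].
      replace (Z / (Z - D) * (Z - D)) with Z in Hn by (field; lra). lra. }
    apply (Rmult_lt_reg_r (INR n)); auto. replace (Z / INR n * INR n) with Z by (field; lra). lra. }
  lra.
Qed.

Module Dv.
Import Coquelicot.Coquelicot.
Lemma d_chi s : derivable_pt_lim (fun t => (t - 1) ^ 2) s (2 * (s - 1)).
Proof. apply is_derive_Reals. auto_derive. auto. ring. Qed.
Lemma d_chi1 s : derivable_pt_lim (fun t => 2 * (t - 1)) s 2.
Proof. apply is_derive_Reals. auto_derive. auto. ring. Qed.
Lemma d_ney s : 0 < s -> derivable_pt_lim (fun t => (1 - t) ^ 2 / t) s (1 - 1 / s ^ 2).
Proof. intros Hs. apply is_derive_Reals. auto_derive. lra. field. lra. Qed.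
Lemma d_ney1 s : 0 < s -> derivable_pt_lim (fun t => 1 - 1 / t ^ 2) s (2 / s ^ 3).
Proof. intros Hs. apply is_derive_Reals. auto_derive. { intro E0. nra. } field. lra. Qed.
Lemma d_cube s : derivable_pt_lim (fun t => t ^ 3) s (3 * s ^ 2).
Proof. apply is_derive_Reals. auto_derive. auto. ring. Qed.
End Dv.

Lemma taylor (J : R -> Prop) (g g1 g2 : R -> R) :
  (forall u v t, J u -> J v -> u <= t <= v -> J t) ->
  (forall t, J t -> derivable_pt_lim g t (g1 t)) ->
  (forall t, J t -> derivable_pt_lim g1 t (g2 t)) ->
  (forall t, J t -> 0 <= g2 t) ->
  forall u v, J u -> J v -> 0 <= g v - g u - g1 u * (v - u).
Proof.
  intros Jc H1 H2 H3.
  assert (Mono : forall a b, J a -> J b -> a <= b -> g1 a <= g1 b).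
  { intros a b Ja Jb Hab. destruct (Req_dec a b) as [e|ne]. subst; lra.
    destruct (MVT_cor2 g1 g2 a b ltac:(lra)) as [c [Hc1 Hc2]].
    { intros c Hc. apply H2. apply (Jc a b); auto. }
    assert (J c) by (apply (Jc a b); auto; lra).
    specialize (H3 c H). nra. }
  intros u v Ju Jv. destruct (Rtotal_order u v) as [lt|[eq|gt]].
  - destruct (MVT_cor2 g g1 u v lt) as [c [Hc1 Hc2]].
    { intros c Hc. apply H1. apply (Jc u v); auto. }
    assert (J c) by (apply (Jc u v); auto; lra).
    pose proof (Mono u c Ju H ltac:(lra)). nra.
  - subst. lra.
  - destruct (MVT_cor2 g g1 v u gt) as [c [Hc1 Hc2]].
    { intros c Hc. apply H1. apply (Jc v u); auto. }
    assert (J c) by (apply (Jc v u); auto; lra).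
    pose proof (Mono c u H Ju ltac:(lra)). nra.
Qed.

Lemma taylor_comb (J : R -> Prop) (f f1 f2 p p1 p2 : R -> R) al be :
  (forall u v t, J u -> J v -> u <= t <= v -> J t) ->
  (forall t, J t -> derivable_pt_lim f t (f1 t)) ->
  (forall t, J t -> derivable_pt_lim f1 t (f2 t)) ->
  (forall t, J t -> derivable_pt_lim p t (p1 t)) ->
  (forall t, J t -> derivable_pt_lim p1 t (p2 t)) ->
  (forall t, J t -> be * p2 t <= al * f2 t) ->
  forall u v, J u -> J v -> be * Breg p p1 v u <= al * Breg f f1 v u.
Proof.
  intros Jc Hf1 Hf2 Hp1 Hp2 Hle u v Ju Jv.
  pose proof (taylor J (fun t => al * f t - be * p t) (fun t => al * f1 t - be * p1 t)
    (fun t => al * f2 t - be * p2 t) Jc) as K.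
  assert (0 <= (al * f v - be * p v) - (al * f u - be * p u) - (al * f1 u - be * p1 u) * (v - u)).
  { apply K; auto.
    - intros t Jt. exact (derivable_pt_lim_minus _ _ _ _ _ (derivable_pt_lim_scal _ al _ _ (Hf1 t Jt))
        (derivable_pt_lim_scal _ be _ _ (Hp1 t Jt))).
    - intros t Jt. exact (derivable_pt_lim_minus _ _ _ _ _ (derivable_pt_lim_scal _ al _ _ (Hf2 t Jt))
        (derivable_pt_lim_scal _ be _ _ (Hp2 t Jt))).
    - intros t Jt. specialize (Hle t Jt). lra. }
  unfold Breg. lra.
Qed.

Lemma neyman_eq {T} (P Q : T -> R) : (forall x, 0 < P x) -> (forall x, 0 < Q x) ->
  Df (fun t => (1 - t) ^ 2 / t) P Q = chi2 Q P.
Proof.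
  intros HP HQ. unfold chi2, Df. f_equal. apply functional_extensionality. intro x.
  specialize (HP x); specialize (HQ x). field. lra.
Qed.

Lemma f1_mono (f f1 : R -> R) s1 s2 : convex_pos f -> 0 < s1 -> s1 < s2 ->
  derivable_pt_lim f s1 (f1 s1) -> derivable_pt_lim f s2 (f1 s2) -> f1 s1 <= f1 s2.
Proof.
  intros Hc H1 H12 D1 D2.
  pose proof (rd_secant_right f s1 (f1 s1) (s2 - s1) Hc H1 (deriv_rd _ _ _ D1) ltac:(lra)).
  pose proof (rd_secant_left f s2 (f1 s2) (s2 - s1) Hc ltac:(lra) (deriv_rd _ _ _ D2) ltac:(lra)).
  replace (s1 + (s2 - s1)) with s2 in H by ring. replace (s2 - (s2 - s1)) with s1 in H0 by ring.
  nra.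
Qed.

Lemma deriv_lb_right (g : R -> R) t l m e : derivable_pt_lim g t l -> 0 < e ->
  (forall h, 0 < h < e -> m <= (g (t + h) - g t) / h) -> m <= l.
Proof.
  intros Hd He Hq. destruct (Rle_lt_dec m l) as [ok|bad]; auto. exfalso.
  destruct (Hd (m - l) ltac:(lra)) as [d Hdd].
  set (h := Rmin d e / 2).
  assert (0 < Rmin d e) by (apply Rmin_glb_lt; [apply cond_pos|auto]).
  assert (Hh : 0 < h < e) by (unfold h; pose proof (Rmin_r d e); lra).
  assert (Hhd : Rabs h < d) by (rewrite Rabs_right by lra; unfold h; pose proof (Rmin_l d e); lra).
  specialize (Hdd h ltac:(lra) Hhd). specialize (Hq h Hh). apply Rabs_def2 in Hdd. lra.
Qed.

Lemma deriv_lb_left (g : R -> R) t l m e : derivable_pt_lim g t l -> 0 < e ->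
  (forall h, - e < h < 0 -> m <= (g (t + h) - g t) / h) -> m <= l.
Proof.
  intros Hd He Hq. destruct (Rle_lt_dec m l) as [ok|bad]; auto. exfalso.
  destruct (Hd (m - l) ltac:(lra)) as [d Hdd].
  set (h := - (Rmin d e / 2)).
  assert (0 < Rmin d e) by (apply Rmin_glb_lt; [apply cond_pos|auto]).
  assert (Hh : - e < h < 0) by (unfold h; pose proof (Rmin_r d e); lra).
  assert (Hhd : Rabs h < d) by (rewrite Rabs_left by lra; unfold h; pose proof (Rmin_l d e); lra).
  specialize (Hdd h ltac:(lra) Hhd). specialize (Hq h Hh). apply Rabs_def2 in Hdd. lra.
Qed.

Lemma f2_nonneg (f f1 f2 : R -> R) t : convex_pos f -> 0 < t ->
  (exists d, 0 < d /\ forall s, Rabs (s - t) < d -> derivable_pt_lim f s (f1 s)) ->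
  derivable_pt_lim f1 t (f2 t) -> 0 <= f2 t.
Proof.
  intros Hc Ht [d [Hd Hs]] H2.
  apply (deriv_lb_right f1 t (f2 t) 0 (Rmin d t)); auto.
  apply Rmin_glb_lt; auto.
  intros h Hh. pose proof (Rmin_l d t). pose proof (Rmin_r d t).
  assert (f1 t <= f1 (t + h)).
  { apply (f1_mono f); auto; try lra; apply Hs.
    - rewrite Rminus_diag, Rabs_R0; auto.
    - replace (t + h - t) with h by ring. rewrite Rabs_right; lra. }
  apply Rmult_le_pos; [lra|left; apply Rinv_0_lt_compat; lra].
Qed.

Lemma cont_eps (g : R -> R) c : continuity_pt g c ->
  forall eps, 0 < eps -> exists del, 0 < del /\ forall t, Rabs (t - c) < del -> Rabs (g t - g c) < eps.
Proof.
  intros H eps He. unfold continuity_pt, continue_in, limit1_in, limit_in in H.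
  destruct (H eps He) as [del [Hdel Hx]]. exists del. split; auto.
  intros t Ht. destruct (Req_dec t c) as [e|ne].
  - subst. rewrite Rminus_diag, Rabs_R0. auto.
  - apply (Hx t). split. unfold D_x, no_cond. split; auto. simpl. unfold R_dist. auto.
Qed.

Lemma inhabited_HS {T} (g : T -> R) : HS g 1 -> exists x : T, True.
Proof.
  intros H. destruct (HS_approx g 1 1 H ltac:(lra)) as [l [_ Hl]].
  destruct l as [|x l]. simpl in Hl; lra. exists x; auto.
Qed.

Lemma ratio_gen {X Y} (P Q : X -> R) (W : X -> Y -> R) (f f1 f2 p p1 p2 : R -> R) L eps a b d e :
  (forall x, 0 < P x) -> (forall x, 0 < Q x) -> HS P 1 -> HS Q 1 ->
  stochastic W -> (forall y, exists x, 0 < W x y) -> convex_pos f ->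
  (forall t, 0 < t -> 0 <= p t) -> 0 < eps ->
  (forall t, intI P Q t -> derivable_pt_lim f t (f1 t)) ->
  (forall t, intI P Q t -> derivable_pt_lim f1 t (f2 t)) ->
  (forall t, intI P Q t -> derivable_pt_lim p t (p1 t)) ->
  (forall t, intI P Q t -> derivable_pt_lim p1 t (p2 t)) ->
  (forall t, intI P Q t -> 0 <= p2 t) ->
  (forall t, intI P Q t -> (L - eps) / 2 * p2 t <= 1 * f2 t) ->
  (forall t, intI P Q t -> 1 * f2 t <= (L + eps) / 2 * p2 t) ->
  Df f P Q = Fin a -> Df f (push P W) (push Q W) = Fin b ->
  Df p P Q = Fin d -> Df p (push P W) (push Q W) = Fin e -> d - e <> 0 ->
  Rabs ((a - b) / (d - e) - L / 2) < eps.
Proof.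
  intros HP HQ SP SQ HW HWy Hc Hp He Df1 Df2 Dp1 Dp2 Hp2 Hlo Hhi DA DB DC DD Hne.
  destruct (affine_lb f Hc) as [al [be Hab]].
  assert (Hpl : forall t, 0 < t -> 0 + 0 * t <= p t) by (intros t Ht; specialize (Hp t Ht); lra).
  assert (Icv : forall u v t, intI P Q u -> intI P Q v -> u <= t <= v -> intI P Q t) by apply intI_conv.
  assert (Lo : (L - eps) / 2 * (d - e) <= 1 * (a - b)).
  { apply (core P Q W f p f1 p1 al be 0 0 1 ((L - eps) / 2) a d b e); auto.
    intros u v Hu Hv. apply (taylor_comb (intI P Q) f f1 f2 p p1 p2); auto. }
  assert (Hi : 1 * (a - b) <= (L + eps) / 2 * (d - e)).
  { apply (core P Q W p f p1 f1 0 0 al be ((L + eps) / 2) 1 d a e b); auto.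
    intros u v Hu Hv. apply (taylor_comb (intI P Q) p p1 p2 f f1 f2); auto. }
  assert (Nn : 0 * (d - e) <= 1 * (d - e)).
  { apply (core P Q W p p p1 p1 0 0 0 0 1 0 d d e e); auto.
    intros u v Hu Hv. apply (taylor_comb (intI P Q) p p1 p2 p p1 p2); auto.
    intros t Ht. specialize (Hp2 t Ht). lra. }
  assert (Hpos : 0 < d - e) by lra.
  assert ((L - eps) / 2 <= (a - b) / (d - e)).
  { apply (Rmult_le_reg_r (d - e)); auto. replace ((a - b) / (d - e) * (d - e)) with (a - b) by (field; lra). lra. }
  assert ((a - b) / (d - e) <= (L + eps) / 2).
  { apply (Rmult_le_reg_r (d - e)); auto. replace ((a - b) / (d - e) * (d - e)) with (a - b) by (field; lra). lra. }
  apply Rabs_def1; lra.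
Qed.

Lemma Ipos {T} (P Q : T -> R) t : intI P Q t -> 0 < t.
Proof. intros [H _]; exact H. Qed.

Lemma chi_lb : forall t, 0 < t -> 0 + 0 * t <= (t - 1) ^ 2.
Proof. intros t _. pose proof (pow2_ge_0 (t - 1)). lra. Qed.

Lemma ney_lb : forall t, 0 < t -> 0 + 0 * t <= (1 - t) ^ 2 / t.
Proof. intros t Ht. pose proof (pow2_ge_0 (1 - t)).
  assert (0 <= (1 - t) ^ 2 / t) by (apply Rmult_le_pos; [lra|left; apply Rinv_0_lt_compat; lra]). lra. Qed.

Lemma part_a {X Y} (PX QX : X -> R) (W : X -> Y -> R) (f : R -> R) :
  (forall x, 0 < PX x) -> (forall x, 0 < QX x) -> HS PX 1 -> HS QX 1 ->
  stochastic W -> (forall y, exists x, 0 < W x y) -> convex_pos f ->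
  forall c, cf_ok f (intI PX QX) c ->
  ge_diff (Df f PX QX) (Df f (push PX W) (push QX W)) (chi2 PX QX) (chi2 (push PX W) (push QX W)) c.
Proof.
  intros HP HQ SP SQ HW HWy Hc c [Hc0 Hcf] a b d e HA HB HC HD.
  destruct (fchoice (fun t a => 0 < t -> is_rderiv f t a)) as [sg Hsg].
  { intro t. destruct (Rlt_le_dec 0 t) as [r|r].
    - destruct (rd_exists f t Hc r) as [a0 Ha0]; exists a0; auto.
    - exists 0; intro; lra. }
  destruct (affine_lb f Hc) as [al [be Hab]].
  assert (Nn : 0 * (d - e) <= 1 * (d - e)).
  { apply (core PX QX W (fun t => (t - 1) ^ 2) (fun t => (t - 1) ^ 2) (fun t => 2 * (t - 1))
      (fun t => 2 * (t - 1)) 0 0 0 0 1 0 d d e e); auto using chi_lb.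
    intros u v _ _. unfold Breg. pose proof (pow2_ge_0 (v - u)).
    replace ((v - 1) ^ 2 - (u - 1) ^ 2 - 2 * (u - 1) * (v - u)) with ((v - u) ^ 2) by ring. lra. }
  split.
  - pose proof (core PX QX W f (fun t => (t - 1) ^ 2) sg (fun t => 2 * (t - 1)) al be 0 0 1 c a d b e
      HP HQ SP SQ HW HWy Hab chi_lb) as K.
    rewrite Rmult_1_l in K. apply K; auto.
    intros u v Iu Iv. unfold Breg.
    replace ((v - 1) ^ 2 - (u - 1) ^ 2 - 2 * (u - 1) * (v - u)) with ((v - u) ^ 2) by ring.
    rewrite Rmult_1_l.
    apply (partition_bound f (intI PX QX) sg c Hc (intI_conv PX QX) (Ipos PX QX)); auto.
    + intros t It. apply Hsg. apply (Ipos _ _ _ It).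
    + intros u' v' Iu' Iv' Huv. apply (Hcf u' v' (sg u') (sg v')); auto; apply Hsg; eapply Ipos; eauto.
  - apply Rmult_le_pos; auto. lra.
Qed.

Lemma le_div m z h : 0 < h -> m * h <= z -> m <= z / h.
Proof. intros Hh H. apply (Rmult_le_reg_r h); auto. replace (z / h * h) with z by (field; lra). lra. Qed.

Lemma le_div_neg m z h : h < 0 -> z <= m * h -> m <= z / h.
Proof.
  intros Hh H. replace (z / h) with ((- z) / (- h)) by (field; lra).
  apply le_div; lra.
Qed.

Lemma img_ne {T} (P Q : T -> R) (g : R -> R) : intI P Q 1 -> exists y, img (intI P Q) g y.
Proof. intros H. exists (g 1). exists 1. auto. Qed.

Lemma part_bcd {X Y} (PX QX : X -> R) (W : X -> Y -> R) (f : R -> R) :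
  (forall x, 0 < PX x) -> (forall x, 0 < QX x) -> HS PX 1 -> HS QX 1 ->
  stochastic W -> (forall y, exists x, 0 < W x y) -> convex_pos f ->
  let PY := push PX W in let QY := push QX W in let I := intI PX QX in
  (forall f2 : R -> R, twice_diff_on f I f2 ->
     (cf_ok f I (/ 2 * Rinf (img I f2)) /\
      ((exists x, PX x <> QX x) ->
         forall c, cf_ok f I c -> c <= / 2 * Rinf (img I f2))) /\
     ge_diff (Df f PX QX) (Df f PY QY) (chi2 QX PX) (chi2 QY PY)
       (/ 2 * Rinf (img I (fun t => t ^ 3 * f2 t))) /\
     (bound (img I f2) ->
        le_diff (Df f PX QX) (Df f PY QY) (chi2 PX QX) (chi2 PY QY)
          (/ 2 * Rsup (img I f2))) /\
     (bound (img I (fun t => t ^ 3 * f2 t)) ->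
        le_diff (Df f PX QX) (Df f PY QY) (chi2 QX PX) (chi2 QY PY)
          (/ 2 * Rsup (img I (fun t => t ^ 3 * f2 t))))).
Proof.
  intros HP HQ SP SQ HW HWy Hc. cbv zeta.
  intros f2 [f1 [Hf1 Hf2]].
  set (I := intI PX QX).
  assert (Df1 : forall t, I t -> derivable_pt_lim f t (f1 t)).
  { intros t It. destruct (Hf1 t It) as [d [Hd Hs]]. apply Hs. rewrite Rminus_diag, Rabs_R0; auto. }
  assert (f2nn : forall t, I t -> 0 <= f2 t).
  { intros t It. apply (f2_nonneg f f1 f2 t Hc (Ipos _ _ _ It)); auto. }
  assert (I1 : I 1) by (apply one_in; auto).
  assert (Icv : forall u v t, I u -> I v -> u <= t <= v -> I t) by apply intI_conv.
  assert (PYp : forall y, 0 < push PX W y) by (intro y; apply push_pos; auto).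
  assert (QYp : forall y, 0 < push QX W y) by (intro y; apply push_pos; auto).
  destruct (affine_lb f Hc) as [al [be Hab]].
  assert (Rinf0 : 0 <= Rinf (img I f2)).
  { apply Rinf_greatest. apply img_ne; auto. intros y [t [It ->]]. auto. }
  assert (RinfL : forall t, I t -> Rinf (img I f2) <= f2 t).
  { intros t It. apply (Rinf_lb _ _ 0). intros y [s [Is ->]]; auto. exists t; auto. }
  assert (Bn : forall u v, I u -> I v -> 0 * Breg (fun t => (1 - t) ^ 2 / t) (fun t => 1 - 1 / t ^ 2) v u <=
                                       1 * Breg (fun t => (1 - t) ^ 2 / t) (fun t => 1 - 1 / t ^ 2) v u).
  { intros u v Iu Iv. apply (taylor_comb I _ _ (fun t => 2 / t ^ 3) _ _ (fun t => 2 / t ^ 3)); auto.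
    - intros t It; apply Dv.d_ney; eapply Ipos; eauto.
    - intros t It; apply Dv.d_ney1; eapply Ipos; eauto.
    - intros t It; apply Dv.d_ney; eapply Ipos; eauto.
    - intros t It; apply Dv.d_ney1; eapply Ipos; eauto.
    - intros t It. pose proof (Ipos _ _ _ It).
      assert (0 <= 2 / t ^ 3) by (apply Rmult_le_pos; [lra|left; apply Rinv_0_lt_compat; apply pow_lt; lra]). lra. }
  split; [split|split; [|split]].
  -
    split. { apply Rmult_le_pos; lra. }
    intros u v a b Iu Iv Huv Ha Hb.
    assert (a = f1 u) by (apply (rd_unique f u); auto; apply deriv_rd; auto).
    assert (b = f1 v) by (apply (rd_unique f v); auto; apply deriv_rd; auto).
    subst a b.
    destruct (MVT_cor2 f1 f2 u v Huv) as [xi [Hxi1 Hxi2]].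
    { intros c Hc'. apply Hf2. apply (Icv u v); auto. }
    assert (I xi) by (apply (Icv u v); auto; lra).
    specialize (RinfL xi H).
    replace (2 * (/ 2 * Rinf (img I f2))) with (Rinf (img I f2)) by field. nra.
  -
    intros [x0 Hx0] c [Hc0 Hcf].
    assert (Hsl : forall s1 s2, I s1 -> I s2 -> s1 < s2 -> 2 * c * (s2 - s1) <= f1 s2 - f1 s1).
    { intros s1 s2 I1' I2' H12. apply Rge_le. apply (Hcf s1 s2); auto; apply deriv_rd; auto. }
    assert (2 * c <= Rinf (img I f2)); [|lra].
    apply Rinf_greatest. apply img_ne; auto.
    intros y [t [It ->]].
    set (r0 := PX x0 / QX x0).
    assert (Ir0 : I r0) by (apply ratio_in; auto).
    assert (r0ne : r0 <> 1).
    { intro E. apply Hx0. unfold r0 in E. specialize (HQ x0).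
      apply (Rmult_eq_compat_r (QX x0)) in E. field_simplify in E; lra. }
    destruct (Rlt_le_dec t (Rmax 1 r0)) as [lt|ge].
    + set (hi := Rmax 1 r0) in *.
      assert (Ihi : I hi) by (unfold hi, Rmax; destruct (Rle_dec 1 r0); auto).
      apply (deriv_lb_right f1 t (f2 t) (2 * c) (hi - t)); [apply Hf2; exact It|lra|].
      intros h Hh. apply le_div; [lra|].
      assert (I (t + h)) by (apply (Icv t hi); auto; lra).
      specialize (Hsl t (t + h) It H ltac:(lra)). replace (t + h - t) with h in Hsl by ring. lra.
    + set (lo := Rmin 1 r0) in *.
      assert (Ilo : I lo) by (unfold lo, Rmin; destruct (Rle_dec 1 r0); auto).
      assert (lo < t).
      { unfold lo. unfold Rmax in ge; unfold Rmin. destruct (Rle_dec 1 r0); lra. }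
      apply (deriv_lb_left f1 t (f2 t) (2 * c) (t - lo)); [apply Hf2; exact It|lra|].
      intros h Hh. apply le_div_neg; [lra|].
      assert (I (t + h)) by (apply (Icv lo t); auto; lra).
      specialize (Hsl (t + h) t H0 It ltac:(lra)). lra.
  -
    intros a b d e HA HB HC HD.
    rewrite <- (neyman_eq PX QX) in HC by auto.
    rewrite <- (neyman_eq (push PX W) (push QX W)) in HD by auto.
    set (Ri := Rinf (img I (fun t => t ^ 3 * f2 t))).
    assert (Ri0 : 0 <= Ri).
    { apply Rinf_greatest. apply img_ne; auto. intros y [t [It ->]].
      pose proof (Ipos _ _ _ It). apply Rmult_le_pos; auto. left; apply pow_lt; lra. }
    assert (RiL : forall t, I t -> Ri <= t ^ 3 * f2 t).
    { intros t It. apply (Rinf_lb _ _ 0). intros y [s [Is ->]].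
      pose proof (Ipos _ _ _ Is). apply Rmult_le_pos; auto. left; apply pow_lt; lra. exists t; auto. }
    assert (Nn : 0 * (d - e) <= 1 * (d - e)).
    { apply (core PX QX W _ _ _ _ 0 0 0 0 1 0 d d e e HP HQ SP SQ HW HWy ney_lb ney_lb Bn HC HC HD HD). }
    split.
    + pose proof (core PX QX W f (fun t => (1 - t) ^ 2 / t) f1 (fun t => 1 - 1 / t ^ 2) al be 0 0 1
        (/ 2 * Ri) a d b e HP HQ SP SQ HW HWy Hab ney_lb) as K.
      rewrite Rmult_1_l in K. apply K; auto.
      intros u v Iu Iv. apply (taylor_comb I _ _ f2 _ _ (fun t => 2 / t ^ 3)); auto.
      * intros t It; apply Dv.d_ney; eapply Ipos; eauto.
      * intros t It; apply Dv.d_ney1; eapply Ipos; eauto.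
      * intros t It. pose proof (Ipos _ _ _ It). specialize (RiL t It).
        assert (0 < t ^ 3) by (apply pow_lt; lra).
        replace (/ 2 * Ri * (2 / t ^ 3)) with (Ri / t ^ 3) by (field; lra).
        rewrite Rmult_1_l. apply (Rmult_le_reg_r (t ^ 3)); auto.
        replace (Ri / t ^ 3 * t ^ 3) with Ri by (field; lra). lra.
    + apply Rmult_le_pos; lra.
  -
      intros Hbd a b d e HA HB HC HD.
      pose proof (core PX QX W (fun t => (t - 1) ^ 2) f (fun t => 2 * (t - 1)) f1 0 0 al be
        (/ 2 * Rsup (img I f2)) 1 d a e b HP HQ SP SQ HW HWy chi_lb Hab) as K.
      rewrite Rmult_1_l in K. apply K; auto.
      intros u v Iu Iv. apply (taylor_comb I _ _ (fun _ => 2) _ _ f2); auto.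
      * intros t It; apply Dv.d_chi.
      * intros t It; apply Dv.d_chi1.
      * intros t It. pose proof (Rsup_ub (img I f2) (f2 t) Hbd (ex_intro _ t (conj It eq_refl))).
        lra.
  -
      intros Hbd a b d e HA HB HC HD.
      rewrite <- (neyman_eq PX QX) in HC by auto.
      rewrite <- (neyman_eq (push PX W) (push QX W)) in HD by auto.
      pose proof (core PX QX W (fun t => (1 - t) ^ 2 / t) f (fun t => 1 - 1 / t ^ 2) f1 0 0 al be
        (/ 2 * Rsup (img I (fun t => t ^ 3 * f2 t))) 1 d a e b HP HQ SP SQ HW HWy ney_lb Hab) as K.
      rewrite Rmult_1_l in K. apply K; auto.
      intros u v Iu Iv. apply (taylor_comb I _ _ (fun t => 2 / t ^ 3) _ _ f2); auto.
      * intros t It; apply Dv.d_ney; eapply Ipos; eauto.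
      * intros t It; apply Dv.d_ney1; eapply Ipos; eauto.
      * intros t It. pose proof (Ipos _ _ _ It).
        pose proof (Rsup_ub (img I (fun t => t ^ 3 * f2 t)) (t ^ 3 * f2 t) Hbd (ex_intro _ t (conj It eq_refl))).
        set (Rs := Rsup (img I (fun t => t ^ 3 * f2 t))) in *.
        assert (0 < t ^ 3) by (apply pow_lt; lra).
        replace (/ 2 * Rs * (2 / t ^ 3)) with (Rs / t ^ 3) by (field; lra).
        rewrite Rmult_1_l. apply (Rmult_le_reg_r (t ^ 3)); auto.
        replace (Rs / t ^ 3 * t ^ 3) with Rs by (field; lra). lra.
Qed.

Lemma img_const {T} (P Q : T -> R) (g : R -> R) c : intI P Q 1 ->
  (forall t, intI P Q t -> g t = c) ->
  Rinf (img (intI P Q) g) = c /\ Rsup (img (intI P Q) g) = c.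
Proof.
  intros I1 Hg.
  assert (Hall : forall y, img (intI P Q) g y -> y = c) by (intros y [t [It ->]]; auto).
  assert (Hin : img (intI P Q) g c) by (exists 1; split; auto; rewrite Hg; auto).
  split.
  - apply Rle_antisym.
    + apply (Rinf_lb _ _ c); auto. intros y Hy; rewrite (Hall y Hy); lra.
    + apply Rinf_greatest. exists c; auto. intros y Hy; rewrite (Hall y Hy); lra.
  - apply Rle_antisym.
    + apply Rsup_least. exists c; auto. intros y Hy; rewrite (Hall y Hy); lra.
    + apply Rsup_ub; auto. exists c. intros y Hy; rewrite (Hall y Hy); lra.
Qed.

Lemma part_eq {X Y} (PX QX : X -> R) (W : X -> Y -> R) :
  (forall x, 0 < PX x) -> (forall x, 0 < QX x) -> HS PX 1 -> HS QX 1 ->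
  stochastic W -> (forall y, exists x, 0 < W x y) ->
  let PY := push PX W in let QY := push QX W in let I := intI PX QX in
  (cf_ok (fun t => (t - 1) ^ 2) I 1 /\
   twice_diff_on (fun t => (t - 1) ^ 2) I (fun _ => 2) /\
   / 2 * Rinf (img I (fun _ => 2)) = 1 /\
   / 2 * Rsup (img I (fun _ => 2)) = 1 /\
   Df (fun t => (1 - t) ^ 2 / t) PX QX = chi2 QX PX /\
   Df (fun t => (1 - t) ^ 2 / t) PY QY = chi2 QY PY /\
   twice_diff_on (fun t => (1 - t) ^ 2 / t) I (fun t => 2 / t ^ 3) /\
   / 2 * Rinf (img I (fun t => t ^ 3 * (2 / t ^ 3))) = 1 /\
   / 2 * Rsup (img I (fun t => t ^ 3 * (2 / t ^ 3))) = 1).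
Proof.
  intros HP HQ SP SQ HW HWy. cbv zeta.
  assert (I1 : intI PX QX 1) by (apply one_in; auto).
  assert (PYp : forall y, 0 < push PX W y) by (intro y; apply push_pos; auto).
  assert (QYp : forall y, 0 < push QX W y) by (intro y; apply push_pos; auto).
  destruct (img_const PX QX (fun _ => 2) 2 I1 (fun _ _ => eq_refl)) as [C1 C2].
  destruct (img_const PX QX (fun t => t ^ 3 * (2 / t ^ 3)) 2 I1) as [C3 C4].
  { intros t It. pose proof (Ipos _ _ _ It). field. lra. }
  repeat split.
  - lra.
  - intros u v a b Iu Iv Huv Ha Hb.
    assert (a = 2 * (u - 1)) by (apply (rd_unique (fun t => (t - 1) ^ 2) u); auto; apply deriv_rd; apply Dv.d_chi).
    assert (b = 2 * (v - 1)) by (apply (rd_unique (fun t => (t - 1) ^ 2) v); auto; apply deriv_rd; apply Dv.d_chi).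
    subst. lra.
  - exists (fun t => 2 * (t - 1)). split.
    + intros t It. exists 1. split; [lra|]. intros s _. apply Dv.d_chi.
    + intros t It. apply Dv.d_chi1.
  - rewrite C1; field.
  - rewrite C2; field.
  - apply neyman_eq; auto.
  - apply neyman_eq; auto.
  - exists (fun t => 1 - 1 / t ^ 2). split.
    + intros t It. pose proof (Ipos _ _ _ It). exists (t / 2). split; [lra|].
      intros s Hs. apply Dv.d_ney. apply Rabs_def2 in Hs. lra.
    + intros t It. apply Dv.d_ney1. eapply Ipos; eauto.
  - rewrite C3; field.
  - rewrite C4; field.
Qed.

Lemma eventually_e {X} (Pn : nat -> X -> R) (QX : X -> R) (f2 : R -> R) d0 eps :
  (forall x, 0 < QX x) -> HS QX 1 -> (forall n, pmf (Pn n)) ->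
  Un_cv (fun n => Rinf (fun r => exists x, r = Pn n x / QX x)) 1 ->
  Un_cv (fun n => Rsup (fun r => exists x, r = Pn n x / QX x)) 1 ->
  continuity_pt f2 1 -> 0 < d0 -> 0 < eps ->
  exists N, forall n, (N <= n)%nat -> (forall x, 0 < Pn n x) /\
    (forall t, intI (Pn n) QX t -> Rabs (t - 1) < d0 /\ Rabs (f2 t - f2 1) < eps /\
        Rabs (t ^ 3 * f2 t - f2 1) < eps).
Proof.
  intros HQ SQ Hpmf Hinf Hsup Hcont Hd0 He.
  destruct (cont_eps f2 1 Hcont eps He) as [d1 [Hd1 C1]].
  assert (Hc3 : continuity_pt (fun t => t ^ 3 * f2 t) 1).
  { apply (continuity_pt_mult (fun t => t ^ 3) f2 1); auto.
    apply derivable_continuous_pt. exists (3 * 1 ^ 2). apply Dv.d_cube. }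
  destruct (cont_eps _ 1 Hc3 eps He) as [d2 [Hd2 C2]].
  replace (1 ^ 3 * f2 1) with (f2 1) in C2 by ring.
  set (del := Rmin (Rmin d1 d2) (Rmin d0 (1 / 2))).
  assert (Hdel : 0 < del) by (unfold del; repeat apply Rmin_glb_lt; lra).
  assert (Hdel1 : del <= d1 /\ del <= d2 /\ del <= d0 /\ del <= 1/2).
  { unfold del. pose proof (Rmin_l (Rmin d1 d2) (Rmin d0 (1/2))). pose proof (Rmin_r (Rmin d1 d2) (Rmin d0 (1/2))).
    pose proof (Rmin_l d1 d2). pose proof (Rmin_r d1 d2). pose proof (Rmin_l d0 (1/2)). pose proof (Rmin_r d0 (1/2)).
    lra. }
  destruct (Hinf del Hdel) as [N1 HN1]. destruct (Hsup del Hdel) as [N2 HN2].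
  destruct (inhabited_HS QX SQ) as [x0 _].
  exists (max N1 N2). intros n Hn.
  specialize (HN1 n ltac:(lia)). specialize (HN2 n ltac:(lia)).
  unfold Rdist in HN1, HN2.
  set (En := fun r => exists x, r = Pn n x / QX x) in *.
  destruct (Hpmf n) as [Pnn _].
  assert (Ene : exists r, En r) by (exists (Pn n x0 / QX x0); exists x0; auto).
  assert (Elb : forall r, En r -> 0 <= r).
  { intros r [x ->]. apply Rmult_le_pos; auto. left; apply Rinv_0_lt_compat; auto. }
  assert (RiL : forall x, Rinf En <= Pn n x / QX x) by (intro x; apply (Rinf_lb _ _ 0); auto; exists x; auto).
  assert (Eb : bound En).
  { apply NNPP. intro nb. rewrite (Rsup_unb En nb) in HN2. rewrite Rabs_left in HN2 by lra. lra. }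
  assert (RsU : forall x, Pn n x / QX x <= Rsup En) by (intro x; apply Rsup_ub; auto; exists x; auto).
  apply Rabs_def2 in HN1. apply Rabs_def2 in HN2.
  split.
  - intro x. specialize (RiL x). specialize (HQ x).
    assert (0 < Pn n x / QX x) by lra.
    replace (Pn n x) with (Pn n x / QX x * QX x) by (field; lra). apply Rmult_lt_0_compat; auto.
  - intros t [Ht0 [Ht1 Ht2]].
    specialize (Ht1 (Rinf En) RiL). specialize (Ht2 (Rsup En) RsU).
    assert (Rabs (t - 1) < del) by (apply Rabs_def1; lra).
    split; [lra|split].
    + apply C1. lra.
    + apply C2. lra.
Qed.

Lemma part_e {X Y} (QX : X -> R) (W : X -> Y -> R) (f : R -> R) :
  (forall x, 0 < QX x) -> HS QX 1 ->
  stochastic W -> (forall y, exists x, 0 < W x y) -> convex_pos f ->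
  (forall (Pn : nat -> X -> R) (f2 : R -> R),
     (forall n, pmf (Pn n)) ->
     (forall x, Un_cv (fun n => Pn n x) (QX x)) ->
     Un_cv (fun n => Rinf (fun r => exists x, r = Pn n x / QX x)) 1 ->
     Un_cv (fun n => Rsup (fun r => exists x, r = Pn n x / QX x)) 1 ->
     C2_at_1 f f2 ->
     ratio_lim (fun n => Df f (Pn n) QX) (fun n => Df f (push (Pn n) W) (push QX W))
               (fun n => chi2 (Pn n) QX) (fun n => chi2 (push (Pn n) W) (push QX W))
               (f2 1 / 2) /\
     ratio_lim (fun n => Df f (Pn n) QX) (fun n => Df f (push (Pn n) W) (push QX W))
               (fun n => chi2 QX (Pn n)) (fun n => chi2 (push QX W) (push (Pn n) W))
               (f2 1 / 2)).
Proof.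
  intros HQ SQ HW HWy Hc Pn f2 Hpmf _ Hinf Hsup [d0 [f1 [Hd0 [Hder Hcont]]]].
  split; intros eps He;
    destruct (eventually_e Pn QX f2 d0 eps HQ SQ Hpmf Hinf Hsup Hcont Hd0 He) as [N HN];
    exists N; intros n a b d e Hn HA HB HC HD Hne;
    destruct (HN n Hn) as [Pp Ht];
    destruct (pmf_HS _ (Hpmf n)) as [_ SP].
  - apply (ratio_gen (Pn n) QX W f f1 f2 (fun t => (t - 1) ^ 2) (fun t => 2 * (t - 1)) (fun _ => 2)
      (f2 1) eps a b d e); auto.
    + intros t _. apply pow2_ge_0.
    + intros t It. apply Hder. apply Ht; auto.
    + intros t It. apply Hder. apply Ht; auto.
    + intros t _. apply Dv.d_chi.
    + intros t _. apply Dv.d_chi1.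
    + intros t _. lra.
    + intros t It. destruct (Ht t It) as [_ [K _]]. apply Rabs_def2 in K. lra.
    + intros t It. destruct (Ht t It) as [_ [K _]]. apply Rabs_def2 in K. lra.
  - assert (PYp : forall y, 0 < push (Pn n) W y) by (intro y; apply push_pos; auto).
    assert (QYp : forall y, 0 < push QX W y) by (intro y; apply push_pos; auto).
    rewrite <- (neyman_eq (Pn n) QX) in HC by auto.
    rewrite <- (neyman_eq (push (Pn n) W) (push QX W)) in HD by auto.
    apply (ratio_gen (Pn n) QX W f f1 f2 (fun t => (1 - t) ^ 2 / t) (fun t => 1 - 1 / t ^ 2)
      (fun t => 2 / t ^ 3) (f2 1) eps a b d e); auto.
    + intros t Ht0. pose proof (ney_lb t Ht0). lra.
    + intros t It. apply Hder. apply Ht; auto.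
    + intros t It. apply Hder. apply Ht; auto.
    + intros t It. apply Dv.d_ney. eapply Ipos; eauto.
    + intros t It. apply Dv.d_ney1. eapply Ipos; eauto.
    + intros t It. pose proof (Ipos _ _ _ It).
      apply Rmult_le_pos; [lra|left; apply Rinv_0_lt_compat; apply pow_lt; lra].
    + intros t It. destruct (Ht t It) as [_ [_ K]]. apply Rabs_def2 in K. pose proof (Ipos _ _ _ It).
      assert (0 < t ^ 3) by (apply pow_lt; lra).
      replace ((f2 1 - eps) / 2 * (2 / t ^ 3)) with ((f2 1 - eps) / t ^ 3) by (field; lra).
      rewrite Rmult_1_l. apply (Rmult_le_reg_r (t ^ 3)); auto.
      replace ((f2 1 - eps) / t ^ 3 * t ^ 3) with (f2 1 - eps) by (field; lra). lra.
    + intros t It. destruct (Ht t It) as [_ [_ K]]. apply Rabs_def2 in K. pose proof (Ipos _ _ _ It).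
      assert (0 < t ^ 3) by (apply pow_lt; lra).
      replace ((f2 1 + eps) / 2 * (2 / t ^ 3)) with ((f2 1 + eps) / t ^ 3) by (field; lra).
      rewrite Rmult_1_l. apply (Rmult_le_reg_r (t ^ 3)); auto.
      replace ((f2 1 + eps) / t ^ 3 * t ^ 3) with (f2 1 + eps) by (field; lra). lra.
Qed.

Theorem theorem1 (X Y : Type) (PX QX : X -> R) (W : X -> Y -> R) (f : R -> R)
  (HXc : countable X) (HYc : countable Y)
  (HPX : pmf PX) (HQX : pmf QX)
  (HPpos : forall x, 0 < PX x) (HQpos : forall x, 0 < QX x)
  (HW : stochastic W) (HWy : forall y, exists x, 0 < W x y)
  (Hconv : convex_pos f) (Hf1 : f 1 = 0) :
  let PY := push PX W in
  let QY := push QX W in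
  let I := intI PX QX in
  (* (a) *)
  (forall c, cf_ok f I c ->
     ge_diff (Df f PX QX) (Df f PY QY) (chi2 PX QX) (chi2 PY QY) c) /\
  (* (b), (c), (d): f twice differentiable on I with f'' = f2 there *)
  (forall f2 : R -> R, twice_diff_on f I f2 ->
     (* (b) the largest admissible constant is (1/2) inf_I f'' *)
     (cf_ok f I (/ 2 * Rinf (img I f2)) /\
      ((exists x, PX x <> QX x) ->
         forall c, cf_ok f I c -> c <= / 2 * Rinf (img I f2))) /\
     (* (c) *)
     ge_diff (Df f PX QX) (Df f PY QY) (chi2 QX PX) (chi2 QY PY)
       (/ 2 * Rinf (img I (fun t => t ^ 3 * f2 t))) /\
     (* (d) *)
     (bound (img I f2) ->
        le_diff (Df f PX QX) (Df f PY QY) (chi2 PX QX) (chi2 PY QY)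
          (/ 2 * Rsup (img I f2))) /\
     (bound (img I (fun t => t ^ 3 * f2 t)) ->
        le_diff (Df f PX QX) (Df f PY QY) (chi2 QX PX) (chi2 QY PY)
          (/ 2 * Rsup (img I (fun t => t ^ 3 * f2 t))))) /\
  (* equality cases: Pearson's chi^2 (f(t) = (t-1)^2, f'' = 2) with
     c_f = e_f = 1, and Neyman's chi^2 (f(t) = (1-t)^2/t, f''(t) = 2/t^3,
     D_f(P||Q) = chi^2(Q||P)) with c_{f*} = e_{f*} = 1 *)
  (cf_ok (fun t => (t - 1) ^ 2) I 1 /\
   twice_diff_on (fun t => (t - 1) ^ 2) I (fun _ => 2) /\
   / 2 * Rinf (img I (fun _ => 2)) = 1 /\
   / 2 * Rsup (img I (fun _ => 2)) = 1 /\
   Df (fun t => (1 - t) ^ 2 / t) PX QX = chi2 QX PX /\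
   Df (fun t => (1 - t) ^ 2 / t) PY QY = chi2 QY PY /\
   twice_diff_on (fun t => (1 - t) ^ 2 / t) I (fun t => 2 / t ^ 3) /\
   / 2 * Rinf (img I (fun t => t ^ 3 * (2 / t ^ 3))) = 1 /\
   / 2 * Rsup (img I (fun t => t ^ 3 * (2 / t ^ 3))) = 1) /\
  (* (e) *)
  (forall (Pn : nat -> X -> R) (f2 : R -> R),
     (forall n, pmf (Pn n)) ->
     (forall x, Un_cv (fun n => Pn n x) (QX x)) ->
     Un_cv (fun n => Rinf (fun r => exists x, r = Pn n x / QX x)) 1 ->
     Un_cv (fun n => Rsup (fun r => exists x, r = Pn n x / QX x)) 1 ->
     C2_at_1 f f2 ->
     ratio_lim (fun n => Df f (Pn n) QX) (fun n => Df f (push (Pn n) W) QY)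
               (fun n => chi2 (Pn n) QX) (fun n => chi2 (push (Pn n) W) QY)
               (f2 1 / 2) /\
     ratio_lim (fun n => Df f (Pn n) QX) (fun n => Df f (push (Pn n) W) QY)
               (fun n => chi2 QX (Pn n)) (fun n => chi2 QY (push (Pn n) W))
               (f2 1 / 2)).
Proof.
  destruct (pmf_HS PX HPX) as [NP SP]. destruct (pmf_HS QX HQX) as [NQ SQ].
  cbv zeta.
  split; [|split; [|split]].
  - exact (part_a PX QX W f HPpos HQpos SP SQ HW HWy Hconv).
  - exact (part_bcd PX QX W f HPpos HQpos SP SQ HW HWy Hconv).
  - exact (part_eq PX QX W HPpos HQpos SP SQ HW HWy).
  - exact (part_e QX W f HQpos SQ HW HWy Hconv).
Qed.
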